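(* Let $N\ge 3$, $0<p<1$, and let $E_N$ be the minimal cost of a Hamiltonian cycle on $N$ points drawn independently and uniformly in $[0,1]$. Then $$\mathbb E[E_N]=\frac{\Gamma(N+1)}{\Gamma(N+p+1)}\left[(N-1)\,\Gamma(p+1)+\frac{\Gamma(N+p-1)}{\Gamma(N-1)}\right],$$ and consequently $\lim_{N\to\infty}N^{p-1}\,\mathbb E[E_N]=\Gamma(p+1)$.
   Context: For points $x_1,\dots,x_N\in[0,1]$ forming the vertices of the complete graph $\mathcal K_N$, the weight of the edge $\{x_i,x_j\}$ is $|x_i-x_j|^p$ and the cost of a Hamiltonian cycle is the sum of its edge weights; $E_N$ is the minimum of this cost over all Hamiltonian cycles. *)

(* Defs.v *)
From Stdlib Require Import Reals Lra Lia List Permutation Classical ClassicalEpsilon.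
Open Scope R_scope.

(* x^a for real exponent a, with the convention 0^a = 0 (used for a > 0). *)
Definition rpow (x a : R) : R := if Rle_dec x 0 then 0 else Rpower x a.

(* Euler Gamma function, Gamma(s) = int_0^oo t^(s-1) e^(-t) dt, as an
   improper Riemann integral (all arguments used below are >= 1, so the
   integrand is bounded near 0). *)
Definition gamma_integrand (s t : R) : R :=
  if Rle_dec t 0 then 0 else Rpower t (s - 1) * exp (- t).

Definition is_Gamma (s g : R) : Prop :=
  (forall b, 0 <= b -> exists pr : Riemann_integrable (gamma_integrand s) 0 b, True) /\
  (forall eps, 0 < eps -> exists B, forall b, B <= b ->
     forall pr : Riemann_integrable (gamma_integrand s) 0 b,
       Rabs (RiemannInt pr - g) < eps).

Definition Gamma (s : R) : R :=
  proj1_sig (constructive_indefinite_description (fun g => is_Gamma s g \/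
      ~ (exists g', is_Gamma s g'))
    (match classic (exists g', is_Gamma s g') with
     | or_introl (ex_intro _ g H) => ex_intro _ g (or_introl H)
     | or_intror H => ex_intro _ 0 (or_intror H)
     end)).

Definition pt (xs : list R) (i : nat) : R := nth i xs 0.

Fixpoint path_cost (p : R) (xs : list R) (c : list nat) : R :=
  match c with
  | i :: ((j :: _) as c') => rpow (Rabs (pt xs i - pt xs j)) p + path_cost p xs c'
  | _ => 0
  end.

Definition cycle_cost (p : R) (xs : list R) (c : list nat) : R :=
  match c with
  | nil => 0
  | i :: _ => path_cost p xs (c ++ (i :: nil))
  end.

Definition is_ham_cycle (N : nat) (c : list nat) : Prop := Permutation c (seq 0 N).

Definition is_min_cost (N : nat) (p : R) (xs : list R) (m : R) : Prop :=
  (exists c, is_ham_cycle N c /\ cycle_cost p xs c = m) /\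
  (forall c, is_ham_cycle N c -> m <= cycle_cost p xs c).

Definition E_N (N : nat) (p : R) (xs : list R) : R :=
  proj1_sig (constructive_indefinite_description
    (fun m => is_min_cost N p xs m \/ ~ (exists m', is_min_cost N p xs m'))
    (match classic (exists m', is_min_cost N p xs m') with
     | or_introl (ex_intro _ m H) => ex_intro _ m (or_introl H)
     | or_intror H => ex_intro _ 0 (or_intror H)
     end)).

(* IterInt n F v : the iterated Riemann integral over [0,1]^n of F
   (F applied to the list [x_1; ...; x_n]) exists and equals v.
   The outermost integral is over x_1. *)
Fixpoint IterInt (n : nat) (F : list R -> R) (v : R) : Prop :=
  match n with
  | O => v = F nil
  | S n' => exists g : R -> R,
      (forall t, 0 <= t <= 1 -> IterInt n' (fun ys => F (t :: ys)) (g t)) /\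
      exists pr : Riemann_integrable g 0 1, RiemannInt pr = v
  end.

Definition ExpE (N : nat) (p : R) : R :=
  proj1_sig (constructive_indefinite_description
    (fun v => IterInt N (E_N N p) v \/ ~ (exists v', IterInt N (E_N N p) v'))
    (match classic (exists v', IterInt N (E_N N p) v') with
     | or_introl (ex_intro _ v H) => ex_intro _ v (or_introl H)
     | or_intror H => ex_intro _ 0 (or_intror H)
     end)).

(* Main.v *)
Require Import Defs.
From Stdlib Require Import Reals.
From Stdlib Require Import Lra Lia List Permutation ClassicalEpsilon Factorial.
From Coquelicot Require Import Coquelicot.
Open Scope R_scope.


Lemma rpow_pos x a : 0 < x -> rpow x a = Rpower x a.
Proof. intros H; unfold rpow; destruct (Rle_dec x 0); [lra|auto]. Qed.
Lemma rpow_le0 x a : x <= 0 -> rpow x a = 0.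
Proof. intros H; unfold rpow; destruct (Rle_dec x 0); [auto|lra]. Qed.
Lemma Rpower_pos x a : 0 < Rpower x a.
Proof. unfold Rpower; apply exp_pos. Qed.
Lemma rpow_ge0 x a : 0 <= rpow x a.
Proof. unfold rpow; destruct (Rle_dec x 0); [lra|]. left; apply Rpower_pos. Qed.

Lemma rpow_small a eps : 0 < a -> 0 < eps -> forall x, 0 < x < Rpower eps (/ a) -> Rpower x a < eps.
Proof.
  intros Ha He x [H0 H1].
  replace eps with (Rpower (Rpower eps (/a)) a).
  - apply Rlt_Rpower_l; lra.
  - rewrite Rpower_mult. replace (/a * a) with 1 by (field; lra). apply Rpower_1; lra.
Qed.

Lemma rpow_cont a x : 0 < a -> continuous (fun x => rpow x a) x.
Proof.
  intros Ha. apply continuity_pt_filterlim.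
  destruct (Rlt_le_dec 0 x) as [Hx|Hx].
  - apply continuity_pt_ext_loc with (f := fun x => Rpower x a).
    + exists (mkposreal x Hx). intros y Hy. simpl in Hy. unfold ball in Hy; simpl in Hy.
      unfold AbsRing_ball, abs, minus, plus, opp in Hy; simpl in Hy.
      apply Rabs_def2 in Hy. rewrite rpow_pos; [auto|lra].
    + apply derivable_continuous_pt. exists (a * Rpower x (a-1)).
      apply derivable_pt_lim_power; auto.
  - destruct Hx as [Hx|Hx].
    + apply continuity_pt_ext_loc with (f := fun _ => 0).
      * assert (Hx' : 0 < -x) by lra. exists (mkposreal _ Hx'). intros y Hy.
        unfold ball in Hy; simpl in Hy.
        unfold AbsRing_ball, abs, minus, plus, opp in Hy; simpl in Hy.
        apply Rabs_def2 in Hy. rewrite rpow_le0; [auto|lra].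
      * apply continuity_pt_const. intros u v; auto.
    + subst x. intros eps He. exists (Rpower eps (/a)). split; [apply Rpower_pos|].
      intros y [_ Hy]. simpl in *. unfold R_dist in *. rewrite (rpow_le0 0) by lra. 
      replace (y - 0) with y in Hy by ring. replace (rpow y a - 0) with (rpow y a) by ring. unfold rpow. destruct (Rle_dec y 0).
      * rewrite Rabs_R0; auto.
      * rewrite Rabs_right by (left; apply Rpower_pos).
        apply rpow_small; auto. rewrite Rabs_right in Hy; lra.
Qed.

Lemma rpow_derive_pos a x : 0 < x -> is_derive (fun x => rpow x a) x (a * Rpower x (a - 1)).
Proof.
  intros Hx. apply is_derive_ext_loc with (f := fun x => Rpower x a).
  - exists (mkposreal x Hx). intros y Hy. unfold ball in Hy; simpl in Hy.
    unfold AbsRing_ball, abs, minus, plus, opp in Hy; simpl in Hy.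
    apply Rabs_def2 in Hy. rewrite rpow_pos; [auto|lra].
  - apply is_derive_Reals. apply derivable_pt_lim_power; auto.
Qed.

Lemma rpow_derive s x : 1 < s -> is_derive (fun x => rpow x s) x (s * rpow x (s - 1)).
Proof.
  intros Hs. destruct (Rlt_le_dec 0 x) as [Hx|Hx].
  - rewrite (rpow_pos x (s-1)) by auto. apply rpow_derive_pos; auto.
  - destruct Hx as [Hx|Hx].
    + rewrite (rpow_le0 x) by lra. rewrite Rmult_0_r.
      apply is_derive_ext_loc with (f := fun _ => 0).
      * assert (Hx' : 0 < -x) by lra. exists (mkposreal _ Hx'). intros y Hy.
        unfold ball in Hy; simpl in Hy.
        unfold AbsRing_ball, abs, minus, plus, opp in Hy; simpl in Hy.
        apply Rabs_def2 in Hy. rewrite rpow_le0; [auto|lra].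
      * apply is_derive_Reals, derivable_pt_lim_const.
    + subst x. rewrite (rpow_le0 0) by lra. rewrite Rmult_0_r.
      apply is_derive_Reals. intros eps He.
      assert (Hs1 : 0 < s - 1) by lra.
      exists (mkposreal _ (Rpower_pos eps (/(s-1)))). intros h Hh Hlt. simpl in Hlt.
      rewrite Rplus_0_l, (rpow_le0 0) by lra. rewrite Rminus_0_r, Rminus_0_r.
      unfold rpow. destruct (Rle_dec h 0).
      * unfold Rdiv. rewrite Rmult_0_l, Rabs_R0; auto.
      * assert (h>0) by lra. rewrite Rabs_right in Hlt by lra.
        replace (Rpower h s / h) with (Rpower h (s-1)).
        -- rewrite Rabs_right by (left; apply Rpower_pos). apply rpow_small; auto.
        -- replace s with ((s-1) + 1) at 2 by ring. rewrite Rpower_plus, Rpower_1 by auto.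
           field. lra.
Qed.

Lemma rpow_mono a x y : 0 <= a -> x <= y -> rpow x a <= rpow y a.
Proof.
  intros Ha Hxy. unfold rpow. destruct (Rle_dec x 0); destruct (Rle_dec y 0).
  - lra.
  - left; apply Rpower_pos.
  - lra.
  - apply Rle_Rpower_l; lra.
Qed.

Lemma rpow_dpl_pos a x : 0 < x -> derivable_pt_lim (fun x => rpow x a) x (a * Rpower x (a - 1)).
Proof. intros; apply is_derive_Reals, rpow_derive_pos; auto. Qed.

Lemma Rpower_neg_decr e x y : e < 0 -> 0 < x <= y -> Rpower y e <= Rpower x e.
Proof.
  intros He Hxy. assert (E : e = - (- e)) by ring.
  assert (Rpower x (- e) <= Rpower y (- e)) by (apply Rle_Rpower_l; lra).
  assert (Ex := Rpower_Ropp x (- e)). assert (Ey := Rpower_Ropp y (- e)).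
  rewrite Ropp_involutive in Ex, Ey. rewrite Ex, Ey.
  apply Rinv_le_contravar; [apply Rpower_pos|]. auto.
Qed.

Lemma rpow_concave p x y h : 0 < p < 1 -> 0 <= x <= y -> 0 <= h ->
  rpow (y + h) p - rpow y p <= rpow (x + h) p - rpow x p.
Proof.
  intros Hp Hxy Hh.
  destruct (Req_dec x y) as [E|E]; [subst; lra|].
  set (q := fun t => rpow (t + h) p - rpow t p).
  set (df := fun t => if Rle_dec t 0 then 0 else p * Rpower (t + h) (p - 1) - p * Rpower t (p - 1)).
  assert (HM := MVT_gen q x y df).
  rewrite Rmin_left, Rmax_right in HM by lra.
  destruct HM as [c [Hc Heq]].
  - intros t Ht. unfold q, df. destruct (Rle_dec t 0); [lra|]. apply is_derive_Reals.
    apply derivable_pt_lim_minus.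
    + replace (p * Rpower (t + h) (p - 1)) with ((p * Rpower (t + h) (p - 1)) * 1) by ring.
      apply (derivable_pt_lim_comp (fun t => t + h) (fun u => rpow u p)).
      * replace 1 with (1 + 0) by ring. apply derivable_pt_lim_plus.
        -- apply derivable_pt_lim_id.
        -- apply derivable_pt_lim_const.
      * apply rpow_dpl_pos; lra.
    + apply rpow_dpl_pos; lra.
  - intros t Ht. apply continuity_pt_minus.
    + assert (Hc : continuity_pt (fun u => rpow u p) (t + h)).
      { apply continuity_pt_filterlim. apply rpow_cont; lra. }
      apply (continuity_pt_comp (fun t => t + h) (fun u => rpow u p) t); [|exact Hc].
      apply continuity_pt_plus; [apply continuity_pt_id|apply continuity_pt_const; intros u v; auto].
    + apply continuity_pt_filterlim. apply rpow_cont; lra.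
  - unfold q in Heq. assert (df c <= 0).
    { unfold df. destruct (Rle_dec c 0); [lra|].
      assert (Rpower (c + h) (p - 1) <= Rpower c (p - 1)) by (apply Rpower_neg_decr; lra).
      nra. }
    assert (df c * (y - x) <= 0) by nra. lra.
Qed.

Lemma rpow_subadd p x h : 0 < p < 1 -> 0 <= x -> 0 <= h -> rpow (x + h) p <= rpow x p + rpow h p.
Proof.
  intros Hp Hx Hh. assert (H := rpow_concave p 0 x h Hp (conj (Rle_refl 0) Hx) Hh).
  rewrite Rplus_0_l, (rpow_le0 0) in H by lra. lra.
Qed.

Lemma cyc_ineq p lo hi a b M : 0 < p < 1 -> lo <= a <= hi -> lo <= b <= hi -> hi <= M ->
  rpow (M - hi) p + rpow (M - lo) p - rpow (hi - lo) p <=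
  rpow (Rabs (M - a)) p + rpow (Rabs (M - b)) p - rpow (Rabs (a - b)) p.
Proof.
  intros Hp Ha Hb HM.
  assert (forall a b, lo <= a <= hi -> lo <= b <= hi -> a <= b ->
    rpow (M - hi) p + rpow (M - lo) p - rpow (hi - lo) p <=
    rpow (M - a) p + rpow (M - b) p - rpow (b - a) p) as Key.
  { clear a b Ha Hb. intros a b Ha Hb Hab.
    set (u := M - b). set (v := M - a). set (D := M - lo). set (g := M - hi).
    assert (H1 := rpow_concave p (v - u) (D - u) u Hp).
    replace (v - u + u) with v in H1 by ring. replace (D - u + u) with D in H1 by ring.
    assert (H1' : rpow D p - rpow (D - u) p <= rpow v p - rpow (v - u) p).
    { apply H1; unfold u, v, D; lra. }
    assert (H2 : rpow g p <= rpow u p) by (apply rpow_mono; unfold g, u; lra).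
    assert (H3 : rpow (D - u) p <= rpow (D - g) p) by (apply rpow_mono; unfold D, g, u; lra).
    replace (hi - lo) with (D - g) by (unfold D, g; ring).
    replace (b - a) with (v - u) by (unfold u, v; ring). fold u v D g. lra. }
  rewrite (Rabs_right (M - a)), (Rabs_right (M - b)) by lra.
  destruct (Rle_dec a b).
  - rewrite Rabs_left1 by lra. replace (- (a - b)) with (b - a) by ring. apply Key; auto.
  - rewrite Rabs_right by lra. specialize (Key b a Hb Ha ltac:(lra)). lra.
Qed.


Fixpoint insK {A : Type} (k : A -> R) (y : A) (s : list A) : list A :=
  match s with
  | nil => y :: nil
  | x :: s' => if Rle_dec (k y) (k x) then y :: x :: s' else x :: insK k y s'
  end.
Definition sortK {A : Type} (k : A -> R) (l : list A) : list A :=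
  fold_left (fun acc x => insK k x acc) l nil.
Definition ins (y : R) (s : list R) := insK (fun x => x) y s.
Definition sortR (l : list R) := sortK (fun x => x) l.

Lemma map_insK {A} (k : A -> R) y s : map k (insK k y s) = ins (k y) (map k s).
Proof.
  unfold ins. induction s as [|x s IH]; simpl; auto.
  destruct (Rle_dec (k y) (k x)); simpl; auto. rewrite IH; auto.
Qed.

Lemma map_sortK {A} (k : A -> R) l : map k (sortK k l) = sortR (map k l).
Proof.
  unfold sortK, sortR, sortK. change (@nil R) with (map k (@nil A)).
  generalize (@nil A) as acc. induction l as [|x l IH]; intros acc; simpl; auto.
  rewrite IH. f_equal. rewrite map_insK. auto.
Qed.

Lemma perm_insK {A} (k : A -> R) y s : Permutation (insK k y s) (y :: s).
Proof.
  induction s as [|x s IH]; simpl; auto.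
  destruct (Rle_dec (k y) (k x)); auto.
  eapply perm_trans; [apply perm_skip, IH|]. apply perm_swap.
Qed.

Lemma perm_sortK {A} (k : A -> R) l : Permutation (sortK k l) l.
Proof.
  unfold sortK. assert (forall acc, Permutation (fold_left (fun acc x => insK k x acc) l acc) (acc ++ l)).
  { induction l as [|x l IH]; intros acc; simpl.
    - rewrite app_nil_r; auto.
    - eapply perm_trans; [apply IH|]. eapply perm_trans.
      + apply Permutation_app_tail, perm_insK.
      + simpl. apply Permutation_middle. }
  apply H.
Qed.

Fixpoint sortedR (s : list R) : Prop :=
  match s with
  | x :: ((y :: _) as s') => x <= y /\ sortedR s'
  | _ => True
  end.

Lemma sorted_head_le x s : sortedR (x :: s) -> forall z, In z s -> x <= z.
Proof.
  revert x. induction s as [|y s IH]; intros x Hs z Hz; simpl in *; [tauto|].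
  destruct Hs as [Hxy Hs]. destruct Hz as [Hz|Hz]; [subst; auto|].
  specialize (IH y Hs z Hz). lra.
Qed.

Lemma sorted_tail x s : sortedR (x :: s) -> sortedR s.
Proof. destruct s; simpl; tauto. Qed.

Lemma sorted_ins y s : sortedR s -> sortedR (ins y s).
Proof.
  unfold ins. induction s as [|x s IH]; intros Hs; simpl; auto.
  destruct (Rle_dec y x).
  - simpl. split; auto.
  - assert (IH' := IH (sorted_tail _ _ Hs)).
    destruct s as [|z s]; simpl in *.
    + split; [lra|auto].
    + destruct (Rle_dec y z); simpl in *; split; try lra; tauto.
Qed.

Lemma sorted_sortR l : sortedR (sortR l).
Proof.
  unfold sortR, sortK. assert (forall acc, sortedR acc -> sortedR (fold_left (fun acc x => insK (fun x => x) x acc) l acc)).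
  { induction l as [|x l IH]; intros acc Ha; simpl; auto. apply IH. apply sorted_ins; auto. }
  apply H. simpl; auto.
Qed.

Lemma sorted_unique s1 s2 : sortedR s1 -> sortedR s2 -> Permutation s1 s2 -> s1 = s2.
Proof.
  revert s2. induction s1 as [|x s1 IH]; intros s2 H1 H2 HP.
  - apply Permutation_nil in HP; auto.
  - destruct s2 as [|y s2]; [apply Permutation_sym, Permutation_nil_cons in HP; tauto|].
    assert (x = y).
    { assert (Hy : In y (x :: s1)) by (apply Permutation_in with (y :: s2); [apply Permutation_sym; auto|left; auto]).
      assert (Hx : In x (y :: s2)) by (apply Permutation_in with (x :: s1); [auto|left; auto]).
      destruct Hy as [Hy|Hy]; [auto|]. destruct Hx as [Hx|Hx]; [auto|].
      assert (A1 := sorted_head_le _ _ H1 _ Hy). assert (A2 := sorted_head_le _ _ H2 _ Hx). lra. }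
    subst y. f_equal. apply IH.
    + apply sorted_tail with x; auto.
    + apply sorted_tail with x; auto.
    + apply Permutation_cons_inv with x; auto.
Qed.

Lemma sortR_perm l1 l2 : Permutation l1 l2 -> sortR l1 = sortR l2.
Proof.
  intros HP. apply sorted_unique; try apply sorted_sortR.
  eapply perm_trans; [apply perm_sortK|]. eapply perm_trans; [apply HP|].
  apply Permutation_sym, perm_sortK.
Qed.

Lemma sortR_snoc l y : sortR (l ++ y :: nil) = ins y (sortR l).
Proof. unfold sortR, sortK. rewrite fold_left_app. simpl. auto. Qed.

Fixpoint gs (h : R -> R -> R) (s : list R) : R :=
  match s with
  | x :: ((y :: _) as s') => h x y + gs h s'
  | _ => 0
  end.

Definition hdR (s : list R) := hd 0 s.
Definition lastR (s : list R) := last s 0.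

Lemma lastR_cons2 x y s : lastR (x :: y :: s) = lastR (y :: s).
Proof. reflexivity. Qed.

Lemma sorted_bounds s : sortedR s -> forall z, In z s -> hdR s <= z <= lastR s.
Proof.
  induction s as [|x s IH]; intros Hs z Hz; [destruct Hz|].
  unfold hdR; simpl hd. split.
  - destruct Hz as [Hz|Hz]; [subst; lra|]. apply sorted_head_le with s; auto.
  - destruct s as [|y s].
    + destruct Hz as [Hz|Hz]; [subst; unfold lastR; simpl; lra|destruct Hz].
    + rewrite lastR_cons2. assert (Hs' := sorted_tail _ _ Hs).
      destruct Hz as [Hz|Hz].
      * subst z. assert (y <= lastR (y :: s)) by (apply (IH Hs' y); left; auto).
        simpl in Hs. lra.
      * apply (IH Hs' z Hz).
Qed.

Lemma In_lastR s : s <> nil -> In (lastR s) s.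
Proof.
  induction s as [|x s IH]; intros H; [congruence|].
  destruct s as [|y s]; [left; auto|]. rewrite lastR_cons2. right. apply IH; congruence.
Qed.

Lemma hd_ins y s : s <> nil -> sortedR s -> hdR (ins y s) = Rmin y (hdR s).
Proof.
  intros Hn Hs. destruct s as [|x s]; [congruence|]. unfold ins, hdR; simpl.
  destruct (Rle_dec y x); simpl.
  - rewrite Rmin_left; auto.
  - rewrite Rmin_right; auto; lra.
Qed.

Lemma last_ins y s : s <> nil -> sortedR s -> lastR (ins y s) = Rmax y (lastR s).
Proof.
  intros Hn Hs. induction s as [|x s IH]; [congruence|].
  unfold ins; simpl. destruct (Rle_dec y x).
  - assert (x <= lastR (x :: s)) by (apply (sorted_bounds _ Hs); left; auto).
    change (lastR (y :: x :: s) = Rmax y (lastR (x :: s))). rewrite lastR_cons2. rewrite Rmax_right; lra.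
  - destruct s as [|z s].
    + unfold lastR; simpl. rewrite Rmax_left; lra.
    + fold (ins y (z :: s)). rewrite lastR_cons2.
      assert (Hi : exists w t, ins y (z :: s) = w :: t).
      { unfold ins; simpl. destruct (Rle_dec y z); eauto. }
      destruct Hi as [w [t Ht]]. rewrite Ht. change (lastR (x :: w :: t) = Rmax y (lastR (z :: s))).
      rewrite lastR_cons2, <- Ht. apply IH; [congruence|apply sorted_tail with x; auto].
Qed.

Lemma ins_le y a s : y <= a -> ins y (a :: s) = y :: a :: s.
Proof. intros H; unfold ins; simpl; destruct (Rle_dec y a); [auto|lra]. Qed.
Lemma ins_gt y a s : ~ y <= a -> ins y (a :: s) = a :: ins y s.
Proof. intros H; unfold ins; simpl; destruct (Rle_dec y a); [lra|auto]. Qed.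

Lemma ins_nonnil y s : ins y s <> nil.
Proof. destruct s as [|x s]; unfold ins; simpl; [congruence|destruct (Rle_dec y x); congruence]. Qed.

Definition clamp a b y := Rmin (Rmax y a) b.
Definition psi (phi : R -> R) a b y := phi (clamp a b y - a) + phi (b - clamp a b y) - phi (b - a).

Lemma gs_psi_low phi s y : phi 0 = 0 -> sortedR s -> (forall z, In z s -> y <= z) -> gs (fun a b => psi phi a b y) s = 0.
Proof.
  intros H0. induction s as [|x s IH]; intros Hs Hy; simpl; auto.
  destruct s as [|z s]; auto.
  rewrite IH; [|apply sorted_tail with x; auto|intros w Hw; apply Hy; right; auto].
  unfold psi, clamp. simpl in Hs. assert (y <= x) by (apply Hy; left; auto).
  rewrite Rmax_right by lra. rewrite Rmin_left by lra.
  replace (x - x) with 0 by ring. rewrite H0. ring.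
Qed.

Lemma gs_psi_high phi s y : phi 0 = 0 -> sortedR s -> (forall z, In z s -> z <= y) -> gs (fun a b => psi phi a b y) s = 0.
Proof.
  intros H0. induction s as [|x s IH]; intros Hs Hy; simpl; auto.
  destruct s as [|z s]; auto.
  rewrite IH; [|apply sorted_tail with x; auto|intros w Hw; apply Hy; right; auto].
  unfold psi, clamp. simpl in Hs. assert (z <= y) by (apply Hy; right; left; auto).
  rewrite Rmax_left by lra. rewrite Rmin_right by lra.
  replace (z - z) with 0 by ring. rewrite H0. ring.
Qed.

Lemma gs_ins phi y s : phi 0 = 0 -> s <> nil -> sortedR s ->
  gs (fun a b => phi (b - a)) (ins y s) =
  gs (fun a b => phi (b - a)) s + gs (fun a b => psi phi a b y) s
  + phi (hdR s - Rmin y (hdR s)) + phi (Rmax y (lastR s) - lastR s).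
Proof.
  intros H0. induction s as [|a s IH]; intros Hn Hs; [congruence|].
  destruct s as [|b s].
  - unfold ins, hdR, lastR; simpl. destruct (Rle_dec y a); simpl.
    + rewrite Rmin_left, Rmax_right by lra. replace (a - a) with 0 by ring. rewrite H0. ring.
    + rewrite Rmin_right, Rmax_left by lra. replace (a - a) with 0 by ring. rewrite H0. ring.
  - simpl in Hs. destruct Hs as [Hab Hs].
    destruct (Rle_dec y a).
    + rewrite ins_le by auto. change (gs (fun a b => phi (b - a)) (y :: a :: b :: s)) with
        (phi (a - y) + gs (fun a b => phi (b - a)) (a :: b :: s)).
      rewrite gs_psi_low; auto; [|simpl; auto|].
      2:{ intros z Hz. assert (a <= z) by (apply (sorted_bounds (a :: b :: s)); simpl; auto).
          lra. }
      unfold hdR; simpl hd. rewrite Rmin_left by lra.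
      assert (Hl : a <= lastR (a :: b :: s)) by (apply (sorted_bounds (a :: b :: s)); simpl; auto; left; auto).
      rewrite Rmax_right by lra. replace (lastR (a :: b :: s) - lastR (a :: b :: s)) with 0 by ring.
      rewrite H0. ring.
    + rewrite ins_gt by auto.
      assert (Hi : exists w t, ins y (b :: s) = w :: t).
      { unfold ins; simpl. destruct (Rle_dec y b); eauto. }
      destruct Hi as [w [t Ht]].
      assert (Hw : w = Rmin y b).
      { assert (E := hd_ins y (b :: s) ltac:(congruence) Hs). rewrite Ht in E. unfold hdR in E; simpl in E. auto. }
      rewrite Ht. change (gs (fun a b => phi (b - a)) (a :: w :: t)) with
        (phi (w - a) + gs (fun a b => phi (b - a)) (w :: t)).
      rewrite <- Ht. rewrite IH by (auto; congruence).
      change (gs (fun a b => phi (b - a)) (a :: b :: s)) with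
        (phi (b - a) + gs (fun a b => phi (b - a)) (b :: s)).
      change (gs (fun a0 b0 => psi phi a0 b0 y) (a :: b :: s)) with
        (psi phi a b y + gs (fun a0 b0 => psi phi a0 b0 y) (b :: s)).
      rewrite lastR_cons2. unfold hdR; simpl hd. rewrite Hw.
      unfold psi, clamp. rewrite (Rmax_left y a) by lra. rewrite (Rmin_right y a) by lra.
      replace (a - a) with 0 by ring. rewrite H0. ring.
Qed.

Definition dd p a b := rpow (Rabs (a - b)) p.
Definition pathv p (l : list R) := gs (dd p) l.
Definition cycv p (l : list R) := match l with nil => 0 | x :: _ => pathv p (l ++ x :: nil) end.

Lemma dd_sym p a b : dd p a b = dd p b a.
Proof. unfold dd. rewrite Rabs_minus_sym. auto. Qed.

Lemma path_cost_eq p xs c : path_cost p xs c = pathv p (map (pt xs) c).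
Proof.
  induction c as [|i c IH]; auto.
  destruct c as [|j c]; auto. change (path_cost p xs (i :: j :: c)) with
    (rpow (Rabs (pt xs i - pt xs j)) p + path_cost p xs (j :: c)). rewrite IH. auto.
Qed.

Lemma cycle_cost_eq p xs c : cycle_cost p xs c = cycv p (map (pt xs) c).
Proof.
  destruct c as [|i c]; auto. unfold cycle_cost, cycv. rewrite path_cost_eq. rewrite map_app. auto.
Qed.

Lemma gs_snoc h l z : gs h (l ++ z :: nil) = gs h l + match l with nil => 0 | _ => h (lastR l) z end.
Proof.
  induction l as [|x l IH]; simpl; [ring|].
  destruct l as [|y l]; simpl; [unfold lastR; simpl; ring|].
  simpl in IH. rewrite IH. rewrite lastR_cons2. ring.
Qed.

Lemma cycv_cons p x l : cycv p (x :: l) = pathv p (x :: l) + dd p (lastR (x :: l)) x.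
Proof. unfold cycv, pathv. rewrite (gs_snoc _ (x :: l)). auto. Qed.

Lemma cycv_rot1 p x l : cycv p (x :: l) = cycv p (l ++ x :: nil).
Proof.
  destruct l as [|y l].
  - auto.
  - rewrite cycv_cons. simpl app. rewrite cycv_cons.
    unfold pathv. change (y :: l ++ x :: nil) with ((y :: l) ++ x :: nil). rewrite gs_snoc.
    change (gs (dd p) (x :: y :: l)) with (dd p x y + gs (dd p) (y :: l)).
    rewrite lastR_cons2.
    assert (E : lastR (y :: l ++ x :: nil) = x).
    { unfold lastR. rewrite app_comm_cons. apply last_last. }
    change (lastR ((y :: l) ++ x :: nil)) with (lastR (y :: l ++ x :: nil)). rewrite E. rewrite (dd_sym p x y). ring.
Qed.

Lemma cycv_rot p l1 l2 : cycv p (l1 ++ l2) = cycv p (l2 ++ l1).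
Proof.
  revert l2. induction l1 as [|x l1 IH]; intros l2.
  - rewrite app_nil_r. auto.
  - change ((x :: l1) ++ l2) with (x :: (l1 ++ l2)). rewrite cycv_rot1. rewrite <- app_assoc. rewrite IH.
    rewrite <- app_assoc. auto.
Qed.

Definition rp p := fun x => rpow x p.

Lemma gs_ext_sorted h1 h2 s : (forall a b, a <= b -> h1 a b = h2 a b) -> sortedR s -> gs h1 s = gs h2 s.
Proof.
  intros H. induction s as [|x s IH]; intros Hs; auto.
  destruct s as [|y s]; auto. simpl in Hs. destruct Hs as [Hxy Hs].
  change (h1 x y + gs h1 (y :: s) = h2 x y + gs h2 (y :: s)). rewrite H, IH; auto.
Qed.

Lemma cycv_sorted p s : s <> nil -> sortedR s ->
  cycv p s = gs (fun a b => rp p (b - a)) s + rp p (lastR s - hdR s).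
Proof.
  intros Hn Hs. destruct s as [|x s]; [congruence|]. rewrite cycv_cons.
  unfold hdR; simpl hd. f_equal.
  - unfold pathv. apply gs_ext_sorted; auto. intros a b Hab. unfold dd, rp.
    rewrite Rabs_left1 by lra. f_equal. ring.
  - unfold dd, rp. rewrite Rabs_right; auto.
    assert (x <= lastR (x :: s)) by (apply (sorted_bounds _ Hs); left; auto). lra.
Qed.

Definition Sv p l := cycv p (sortR l).

Lemma Sv_perm p l1 l2 : Permutation l1 l2 -> Sv p l1 = Sv p l2.
Proof. intros H. unfold Sv. rewrite (sortR_perm _ _ H). auto. Qed.

Lemma sortR_nil l : l <> nil -> sortR l <> nil.
Proof.
  intros H E. apply H. assert (P := perm_sortK (fun x => x) l). fold (sortR l) in P.
  rewrite E in P. apply Permutation_nil in P. auto.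
Qed.

Lemma rp0 p : 0 < p -> rp p 0 = 0.
Proof. intros; unfold rp; apply rpow_le0; lra. Qed.

Lemma max_exists (l : list R) : l <> nil -> exists M, In M l /\ forall z, In z l -> z <= M.
Proof.
  induction l as [|x l IH]; intros H; [congruence|].
  destruct l as [|y l].
  - exists x. split; [left; auto|]. intros z [Hz|[]]; subst; lra.
  - destruct IH as [M [HM1 HM2]]; [congruence|].
    destruct (Rle_dec x M).
    + exists M. split; [right; auto|]. intros z [Hz|Hz]; [subst; auto|auto].
    + exists x. split; [left; auto|]. intros z [Hz|Hz]; [subst; lra|]. specialize (HM2 z Hz). lra.
Qed.

Lemma cyc_lower p : 0 < p < 1 -> forall n l, length l = n -> Sv p l <= cycv p l.
Proof.
  intros Hp n. induction n as [|n IH]; intros l Hl.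
  - destruct l; [|simpl in Hl; lia]. unfold Sv, sortR, sortK; simpl. lra.
  - destruct (max_exists l) as [M [HM1 HM2]]; [destruct l; simpl in Hl; congruence|].
    destruct (in_split _ _ HM1) as [l1 [l2 E]].
    set (rest := l2 ++ l1).
    assert (Hlen : length rest = n).
    { subst l. unfold rest. rewrite length_app in *. simpl in Hl. lia. }
    assert (Hperm : Permutation l (rest ++ M :: nil)).
    { subst l. unfold rest. eapply perm_trans; [apply Permutation_sym, Permutation_middle|].
      eapply perm_trans; [|apply Permutation_cons_append]. apply perm_skip. apply Permutation_app_comm. }
    assert (Hcyc : cycv p l = cycv p (M :: rest)).
    { subst l. rewrite cycv_rot. unfold rest. auto. }
    rewrite Hcyc. rewrite (Sv_perm _ _ _ Hperm).
    destruct rest as [|r1 rr] eqn:Er.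
    + simpl in Hlen. subst n. unfold Sv, sortR, sortK. simpl. lra.
    + specialize (IH (r1 :: rr) Hlen).
      rewrite cycv_cons. rewrite <- Er in *.
      assert (Hc2 : cycv p rest = pathv p rest + dd p (lastR rest) r1) by (rewrite Er, cycv_cons; auto).
      assert (Hpath : pathv p (M :: rest) = dd p M r1 + pathv p rest) by (rewrite Er; auto).
      assert (Hlast : lastR (M :: rest) = lastR rest) by (rewrite Er; auto).
      rewrite Hpath, Hlast.
      set (s := sortR rest).
      assert (Hsn : s <> nil) by (apply sortR_nil; rewrite Er; congruence).
      assert (Hss : sortedR s) by apply sorted_sortR.
      assert (Hin : forall z, In z rest -> In z s).
      { intros z Hz. apply Permutation_in with rest; auto. apply Permutation_sym, perm_sortK. }
      assert (HallM : forall z, In z s -> z <= M).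
      { intros z Hz. apply HM2. apply Permutation_in with (rest ++ M :: nil).
        - apply Permutation_sym; auto.
        - apply in_or_app; left. apply Permutation_in with s; auto. apply perm_sortK. }
      unfold Sv in *. rewrite sortR_snoc. fold s. fold s in IH.
      rewrite cycv_sorted; [|apply ins_nonnil|apply sorted_ins; auto].
      rewrite cycv_sorted in IH by auto.
      rewrite gs_ins by (auto; apply rp0; lra).
      rewrite gs_psi_high by (auto; apply rp0; lra).
      rewrite hd_ins, last_ins by auto.
      assert (Hhl := proj1 (sorted_bounds s Hss (lastR s) (In_lastR s Hsn))).
      assert (HlM : lastR s <= M) by (apply HallM; apply In_lastR; auto).
      rewrite (Rmin_right M) by lra. rewrite (Rmax_left M) by lra.
      replace (hdR s - hdR s) with 0 by ring. rewrite rp0 by lra.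
      assert (Hr1 : hdR s <= r1 <= lastR s) by (apply (sorted_bounds s Hss); apply Hin; rewrite Er; left; auto).
      assert (Hrl : hdR s <= lastR rest <= lastR s) by (apply (sorted_bounds s Hss); apply Hin; apply In_lastR; rewrite Er; congruence).
      assert (K := cyc_ineq p (hdR s) (lastR s) r1 (lastR rest) M Hp Hr1 Hrl HlM).
      unfold dd, rp in *. rewrite Hc2 in IH. unfold dd in IH.
      rewrite (Rabs_minus_sym (lastR rest) M). rewrite (Rabs_minus_sym (lastR rest) r1) in IH.
      lra.
Qed.

Lemma map_pt_seq xs : map (pt xs) (seq 0 (length xs)) = xs.
Proof.
  induction xs as [|x xs IH]; auto. simpl length. simpl seq. simpl map. f_equal.
  rewrite <- seq_shift, map_map. exact IH.
Qed.

Lemma is_min_Sv N p xs : 0 < p < 1 -> length xs = N -> is_min_cost N p xs (Sv p xs).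
Proof.
  intros Hp Hl. split.
  - exists (sortK (pt xs) (seq 0 N)). split.
    + unfold is_ham_cycle. apply perm_sortK.
    + rewrite cycle_cost_eq, map_sortK. subst N. rewrite map_pt_seq. auto.
  - intros c Hc. rewrite cycle_cost_eq.
    rewrite (Sv_perm p xs (map (pt xs) c)).
    + apply (cyc_lower p Hp _ _ eq_refl).
    + unfold is_ham_cycle in Hc. subst N. rewrite <- (map_pt_seq xs) at 1.
      apply Permutation_map. apply Permutation_sym; auto.
Qed.

Lemma E_N_eq N p xs : 0 < p < 1 -> length xs = N -> E_N N p xs = Sv p xs.
Proof.
  intros Hp Hl. assert (H := is_min_Sv N p xs Hp Hl). unfold E_N.
  destruct (constructive_indefinite_description _ _) as [m [Hm|Hm]]; simpl.
  - destruct Hm as [[c [Hc1 Hc2]] Hm2]. destruct H as [[c' [Hc1' Hc2']] H2].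
    apply Rle_antisym.
    + rewrite <- Hc2'. apply Hm2; auto.
    + rewrite <- Hc2. apply H2; auto.
  - exfalso. apply Hm. exists (Sv p xs). auto.
Qed.

Section C0sec.


Definition cont (f : R -> R) := forall x, continuity_pt f x.
Implicit Types (f g : R -> R) (l If Ig k a b c : R).

Lemma iR_plus f g a b If Ig : is_RInt f a b If -> is_RInt g a b Ig -> is_RInt (fun y => f y + g y) a b (If + Ig).
Proof. intros H1 H2. exact (is_RInt_plus f g a b If Ig H1 H2). Qed.
Lemma iR_minus f g a b If Ig : is_RInt f a b If -> is_RInt g a b Ig -> is_RInt (fun y => f y - g y) a b (If - Ig).
Proof. intros H1 H2. exact (is_RInt_minus f g a b If Ig H1 H2). Qed.
Lemma iR_scal f a b k If : is_RInt f a b If -> is_RInt (fun y => k * f y) a b (k * If).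
Proof. intros H1. exact (is_RInt_scal f a b k If H1). Qed.
Lemma iR_const (a b c : R) : is_RInt (fun _ => c) a b ((b - a) * c).
Proof. exact (@is_RInt_const R_NormedModule a b c). Qed.
Lemma iR_ch f a b c l1 l2 : is_RInt f a b l1 -> is_RInt f b c l2 -> is_RInt f a c (l1 + l2).
Proof. intros H1 H2. exact (is_RInt_Chasles f a b c l1 l2 H1 H2). Qed.
Lemma iR_val f a b l l' : is_RInt f a b l -> l = l' -> is_RInt f a b l'.
Proof. intros H E; subst; auto. Qed.
Lemma iR_ext f g a b l : a <= b -> (forall x, a < x < b -> f x = g x) -> is_RInt f a b l -> is_RInt g a b l.
Proof.
  intros Hab H. apply is_RInt_ext. intros x. rewrite Rmin_left, Rmax_right by auto. apply H.
Qed.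
Lemma iR_ext_all f g a b l : (forall x, f x = g x) -> is_RInt f a b l -> is_RInt g a b l.
Proof. intros H. apply is_RInt_ext. intros; apply H. Qed.
Lemma iR_uniq f a b l : is_RInt f a b l -> RInt f a b = l.
Proof. intros H. exact (@is_RInt_unique R_CompleteNormedModule f a b l H). Qed.

Lemma cont_c (f : R -> R) x : continuity_pt f x -> continuous f x.
Proof. intros H; apply continuity_pt_filterlim; auto. Qed.

Lemma exR_cont f a b : cont f -> ex_RInt f a b.
Proof. intros H. apply (@ex_RInt_continuous R_CompleteNormedModule). intros z _. apply cont_c, H. Qed.

Definition Prim (f : R -> R) (x : R) : R := RInt f 0 x.

Lemma iR_prim f a b : cont f -> is_RInt f a b (Prim f b - Prim f a).
Proof.
  intros H.
  assert (E : Prim f b = Prim f a + RInt f a b).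
  { symmetry. exact (@RInt_Chasles R_CompleteNormedModule f 0 a b (exR_cont f 0 a H) (exR_cont f a b H)). }
  assert (E2 : Prim f b - Prim f a = RInt f a b) by (rewrite E; ring). rewrite E2.
  apply (@RInt_correct R_CompleteNormedModule), exR_cont, H.
Qed.

Lemma Prim0 f : Prim f 0 = 0.
Proof. unfold Prim. exact (@RInt_point R_CompleteNormedModule 0 f). Qed.

Lemma Prim_derive f x : cont f -> derivable_pt_lim (Prim f) x (f x).
Proof.
  intros H. apply is_derive_Reals. apply (is_derive_RInt f (Prim f) 0 x).
  - apply filter_forall. intros b. apply (@RInt_correct R_CompleteNormedModule), exR_cont, H.
  - apply cont_c, H.
Qed.

Lemma Prim_cont f : cont f -> cont (Prim f).
Proof.
  intros H x. apply derivable_continuous_pt. exists (f x). apply Prim_derive; auto.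
Qed.

Lemma iR_shift f a b c : cont f -> is_RInt (fun y => f (y - c)) a b (Prim f (b - c) - Prim f (a - c)).
Proof.
  intros H. assert (H1 := iR_prim f (1 * a + - c) (1 * b + - c) H).
  assert (H2 := is_RInt_comp_lin f 1 (- c) a b _ H1).
  eapply iR_ext_all; [|eapply iR_val; [exact H2|]].
  - intros y. simpl. unfold scal; simpl. unfold mult; simpl. replace (1 * y + - c) with (y - c) by ring. ring.
  - replace (1 * a + - c) with (a - c) by ring. replace (1 * b + - c) with (b - c) by ring. auto.
Qed.

Lemma iR_refl f a b c : cont f -> is_RInt (fun y => f (c - y)) a b (Prim f (c - a) - Prim f (c - b)).
Proof.
  intros H. assert (H1 := iR_prim f (-1 * a + c) (-1 * b + c) H).
  assert (H2 := is_RInt_comp_lin f (-1) c a b _ H1).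
  assert (H3 := iR_scal _ a b (-1) _ H2).
  eapply iR_ext_all; [|eapply iR_val; [exact H3|]].
  - intros y. simpl. unfold scal; simpl. unfold mult; simpl. replace (-1 * y + c) with (c - y) by ring. ring.
  - replace (-1 * a + c) with (c - a) by ring. replace (-1 * b + c) with (c - b) by ring. ring.
Qed.

Lemma cont_plus f g : cont f -> cont g -> cont (fun x => f x + g x).
Proof. intros H1 H2 x. apply continuity_pt_plus; auto. Qed.
Lemma cont_minus f g : cont f -> cont g -> cont (fun x => f x - g x).
Proof. intros H1 H2 x. apply continuity_pt_minus; auto. Qed.
Lemma cont_mult f g : cont f -> cont g -> cont (fun x => f x * g x).
Proof. intros H1 H2 x. apply continuity_pt_mult; auto. Qed.
Lemma cont_const c : cont (fun _ => c).
Proof. intros x. apply continuity_pt_const. intros u v; auto. Qed.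
Lemma cont_id : cont (fun x => x).
Proof. intros x. apply continuity_pt_id. Qed.
Lemma cont_comp f g : cont f -> cont g -> cont (fun x => f (g x)).
Proof. intros H1 H2 x. apply (continuity_pt_comp g f x); auto. Qed.
Lemma cont_pow n : cont (fun x => x ^ n).
Proof. intros x. apply derivable_continuous_pt. apply derivable_pt_pow. Qed.
Lemma cont_scal k f : cont f -> cont (fun x => k * f x).
Proof. intros H. apply cont_mult; auto. apply cont_const. Qed.

End C0sec.


Record st := mkst { sphi : R -> R; sal : R -> R; sbe : R -> R; sga : R -> R }.
Definition Inv (s : st) := cont (sphi s) /\ cont (sal s) /\ cont (sbe s) /\ cont (sga s) /\ sphi s 0 = 0.

Definition Wsorted (s : st) (L : list R) :=
  gs (fun a b => sphi s (b - a)) L + sal s (hdR L) + sbe s (lastR L) + sga s (lastR L - hdR L).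
Definition Wl s L := Wsorted s (sortR L).

Definition T (s : st) : st :=
  let f := sphi s in let al := sal s in let be := sbe s in let ga := sga s in
  mkst (fun g => f g + 2 * Prim f g - g * f g)
       (fun x => Prim f x + Prim al x + (1 - x) * al x + Prim ga (1 - x))
       (fun x => Prim f (1 - x) + x * be x + Prim be 1 - Prim be x + Prim ga x)
       (fun r => r * ga r - 2 * Prim ga r).

Lemma Inv_T s : Inv s -> Inv (T s).
Proof.
  intros [H1 [H2 [H3 [H4 H5]]]]. assert (P1 := Prim_cont _ H1). assert (P2 := Prim_cont _ H2).
  assert (P3 := Prim_cont _ H3). assert (P4 := Prim_cont _ H4).
  assert (R1 : cont (fun x => 1 - x)) by (apply cont_minus; [apply cont_const|apply cont_id]).
  unfold Inv, T; simpl. repeat split.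
  - apply cont_minus; [apply cont_plus; [auto|apply cont_scal; auto]|apply cont_mult; [apply cont_id|auto]].
  - apply cont_plus; [apply cont_plus; [apply cont_plus; auto|apply cont_mult; auto]|].
    apply cont_comp; auto.
  - apply cont_plus; [|auto]. apply cont_minus; [|auto]. apply cont_plus; [|apply cont_const].
    apply cont_plus; [apply cont_comp; auto|apply cont_mult; [apply cont_id|auto]].
  - apply cont_minus; [apply cont_mult; [apply cont_id|auto]|apply cont_scal; auto].
  - rewrite H5, Prim0. ring.
Qed.

Section Pieces.
Variable f : R -> R.
Hypothesis Hf : cont f.

Lemma piece_low m : 0 <= m <= 1 -> f 0 = 0 -> is_RInt (fun y => f (m - Rmin y m)) 0 1 (Prim f m).
Proof.
  intros Hm H0. eapply iR_val; [eapply iR_ch with (b := m)|].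
  - eapply iR_ext; [lra| |apply (iR_refl f 0 m m Hf)].
    intros x Hx. simpl. rewrite Rmin_left by lra. auto.
  - eapply iR_ext; [lra| |apply (iR_const m 1 0)].
    intros x Hx. simpl. rewrite Rmin_right by lra. replace (m - m) with 0 by ring. auto.
  - replace (m - 0) with m by ring. replace (m - m) with 0 by ring. rewrite Prim0. ring.
Qed.

Lemma piece_high M : 0 <= M <= 1 -> f 0 = 0 -> is_RInt (fun y => f (Rmax y M - M)) 0 1 (Prim f (1 - M)).
Proof.
  intros Hm H0. eapply iR_val; [eapply iR_ch with (b := M)|].
  - eapply iR_ext; [lra| |apply (iR_const 0 M 0)].
    intros x Hx. simpl. rewrite Rmax_right by lra. replace (M - M) with 0 by ring. auto.
  - eapply iR_ext; [lra| |apply (iR_shift f M 1 M Hf)].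
    intros x Hx. simpl. rewrite Rmax_left by lra. auto.
  - replace (M - M) with 0 by ring. rewrite Prim0. ring.
Qed.

Lemma piece_min m : 0 <= m <= 1 -> is_RInt (fun y => f (Rmin y m)) 0 1 (Prim f m + (1 - m) * f m).
Proof.
  intros Hm. eapply iR_val; [eapply iR_ch with (b := m)|].
  - eapply iR_ext; [lra| |apply (iR_prim f 0 m Hf)].
    intros x Hx. simpl. rewrite Rmin_left by lra. auto.
  - eapply iR_ext; [lra| |apply (iR_const m 1 (f m))].
    intros x Hx. simpl. rewrite Rmin_right by lra. auto.
  - rewrite Prim0. ring.
Qed.

Lemma piece_max M : 0 <= M <= 1 -> is_RInt (fun y => f (Rmax y M)) 0 1 (M * f M + Prim f 1 - Prim f M).
Proof.
  intros Hm. eapply iR_val; [eapply iR_ch with (b := M)|].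
  - eapply iR_ext; [lra| |apply (iR_const 0 M (f M))].
    intros x Hx. simpl. rewrite Rmax_right by lra. auto.
  - eapply iR_ext; [lra| |apply (iR_prim f M 1 Hf)].
    intros x Hx. simpl. rewrite Rmax_left by lra. auto.
  - ring.
Qed.

Lemma piece_range m M : 0 <= m <= M -> M <= 1 ->
  is_RInt (fun y => f (Rmax y M - Rmin y m)) 0 1
    (Prim f M - 2 * Prim f (M - m) + (M - m) * f (M - m) + Prim f (1 - m)).
Proof.
  intros Hm HM. eapply iR_val; [eapply iR_ch with (b := m); [|eapply iR_ch with (b := M)]|].
  - eapply iR_ext; [lra| |apply (iR_refl f 0 m M Hf)].
    intros x Hx. simpl. rewrite Rmax_right, Rmin_left by lra. auto.
  - eapply iR_ext; [lra| |apply (iR_const m M (f (M - m)))].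
    intros x Hx. simpl. rewrite Rmax_right, Rmin_right by lra. auto.
  - eapply iR_ext; [lra| |apply (iR_shift f M 1 m Hf)].
    intros x Hx. simpl. rewrite Rmax_left, Rmin_right by lra. auto.
  - replace (M - 0) with M by ring. ring.
Qed.

Lemma piece_psi a b : 0 <= a -> a <= b -> b <= 1 -> f 0 = 0 ->
  is_RInt (fun y => psi f a b y) 0 1 (2 * Prim f (b - a) - (b - a) * f (b - a)).
Proof.
  intros Ha Hab Hb H0. eapply iR_val; [eapply iR_ch with (b := a); [|eapply iR_ch with (b := b)]|].
  - eapply iR_ext; [lra| |apply (iR_const 0 a 0)].
    intros x Hx. unfold psi, clamp. rewrite Rmax_right, Rmin_left by lra.
    replace (a - a) with 0 by ring. rewrite H0. ring.
  - eapply iR_ext; [lra| |apply iR_minus; [apply iR_plus; [apply (iR_shift f a b a Hf)|apply (iR_refl f a b b Hf)]|apply (iR_const a b (f (b - a)))]].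
    intros x Hx. unfold psi, clamp. rewrite Rmax_left, Rmin_left by lra. auto.
  - eapply iR_ext; [lra| |apply (iR_const b 1 0)].
    intros x Hx. unfold psi, clamp. rewrite Rmax_left, Rmin_right by lra.
    replace (b - b) with 0 by ring. rewrite H0. ring.
  - replace (a - a) with 0 by ring. replace (b - b) with 0 by ring. rewrite Prim0. ring.
Qed.

End Pieces.

Definition in01 (x : R) := 0 <= x <= 1.

Lemma gs_plus h1 h2 s : gs (fun a b => h1 a b + h2 a b) s = gs h1 s + gs h2 s.
Proof.
  induction s as [|x s IH]; simpl; [ring|]. destruct s as [|y s]; [ring|].
  rewrite IH. ring.
Qed.

Lemma piece_gs f s : cont f -> f 0 = 0 -> sortedR s -> (forall z, In z s -> in01 z) ->
  is_RInt (fun y => gs (fun a b => psi f a b y) s) 0 1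
    (gs (fun a b => 2 * Prim f (b - a) - (b - a) * f (b - a)) s).
Proof.
  intros Hf H0. induction s as [|x s IH]; intros Hs Hin.
  - simpl. eapply iR_val; [apply (iR_const 0 1 0)|ring].
  - destruct s as [|y s].
    + simpl. eapply iR_val; [apply (iR_const 0 1 0)|ring].
    + simpl in Hs. destruct Hs as [Hxy Hs].
      change (is_RInt (fun y0 => psi f x y y0 + gs (fun a b => psi f a b y0) (y :: s)) 0 1
        (2 * Prim f (y - x) - (y - x) * f (y - x) + gs (fun a b => 2 * Prim f (b - a) - (b - a) * f (b - a)) (y :: s))).
      apply iR_plus.
      * assert (in01 x) by (apply Hin; left; auto). assert (in01 y) by (apply Hin; right; left; auto).
        unfold in01 in *. apply piece_psi; auto; lra.
      * apply IH; auto. intros z Hz; apply Hin; right; auto.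
Qed.

Lemma insert_lemma s L : Inv s -> L <> nil -> sortedR L -> (forall z, In z L -> in01 z) ->
  is_RInt (fun y => Wsorted s (ins y L)) 0 1 (Wsorted (T s) L).
Proof.
  intros [H1 [H2 [H3 [H4 H5]]]] Hn Hs Hin.
  set (m := hdR L). set (M := lastR L).
  assert (Hm : in01 m) by (apply Hin; destruct L; [congruence|left; auto]).
  assert (HM : in01 M) by (apply Hin; apply In_lastR; auto).
  assert (HmM : m <= M) by exact (proj1 (sorted_bounds L Hs M (In_lastR L Hn))).
  unfold in01 in *.
  eapply iR_ext_all.
  { intros y. symmetry. unfold Wsorted. rewrite gs_ins, hd_ins, last_ins by auto. fold m M. reflexivity. }
  unfold Wsorted, T; simpl. fold m M.
  eapply iR_val.
  { apply iR_plus; [apply iR_plus; [apply iR_plus|]|].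
    - apply iR_plus; [apply iR_plus; [apply iR_plus|]|].
      + apply (iR_const 0 1 (gs (fun a b => sphi s (b - a)) L)).
      + apply piece_gs; auto.
      + apply piece_low; auto.
      + apply piece_high; auto.
    - apply piece_min; auto.
    - apply piece_max; auto.
    - apply piece_range; auto; try split; lra. }
  rewrite (gs_ext_sorted (fun a b => sphi s (b - a) + 2 * Prim (sphi s) (b - a) - (b - a) * sphi s (b - a))
     (fun a b => sphi s (b - a) + (2 * Prim (sphi s) (b - a) - (b - a) * sphi s (b - a)))) by (auto; intros; ring).
  rewrite gs_plus. ring.
Qed.

Fixpoint Tn (n : nat) (s : st) : st := match n with O => s | S n => T (Tn n s) end.

Lemma Inv_Tn n s : Inv s -> Inv (Tn n s).
Proof. induction n; simpl; auto. intros; apply Inv_T; auto. Qed.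

Lemma IterInt_ext n F G v : (forall ys, length ys = n -> F ys = G ys) -> IterInt n F v -> IterInt n G v.
Proof.
  revert F G v. induction n as [|n IH]; intros F G v HFG H; simpl in *.
  - rewrite H. apply HFG; auto.
  - destruct H as [g [Hg Hv]]. exists g. split; auto.
    intros t Ht. apply (IH (fun ys => F (t :: ys))); [|apply Hg; auto].
    intros ys Hl. apply HFG. simpl; auto.
Qed.

Lemma iR_to_Riemann g v : is_RInt g 0 1 v -> exists pr : Riemann_integrable g 0 1, RiemannInt pr = v.
Proof.
  intros H. assert (Hex : ex_RInt g 0 1) by (exists v; auto).
  exists (ex_RInt_Reals_0 g 0 1 Hex). rewrite <- RInt_Reals. apply iR_uniq; auto.
Qed.

Lemma main_iter m : forall s pre, Inv s -> pre <> nil -> (forall z, In z pre -> in01 z) ->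
  IterInt m (fun ys => Wl s (pre ++ ys)) (Wl (Tn m s) pre).
Proof.
  induction m as [|m IH]; intros s pre Hs Hn Hin; simpl.
  - rewrite app_nil_r. auto.
  - exists (fun t => Wl (Tn m s) (pre ++ t :: nil)). split.
    + intros t Ht. apply IterInt_ext with (fun ys => Wl s ((pre ++ t :: nil) ++ ys)).
      * intros ys _. rewrite <- app_assoc. auto.
      * apply IH; auto.
        -- destruct pre; simpl; congruence.
        -- intros z Hz. apply in_app_or in Hz. destruct Hz as [Hz|[Hz|[]]]; auto. subst; auto.
    + apply iR_to_Riemann. unfold Wl. eapply iR_ext_all.
      { intros y. rewrite sortR_snoc. reflexivity. }
      apply insert_lemma.
      * apply Inv_Tn; auto.
      * apply sortR_nil; auto.
      * apply sorted_sortR.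
      * intros z Hz. apply Hin. apply Permutation_in with (sortR pre); auto. apply perm_sortK.
Qed.


Lemma INRS_pos n : 0 < INR (S n).
Proof. apply lt_0_INR. lia. Qed.

Lemma nzS n : INR (S n) <> 0.
Proof. apply Rgt_not_eq, INRS_pos. Qed.

Ltac fixINR n := change (match n with 0%nat => 1 | S _ => INR n + 1 end) with (INR (S n)) in *.

Lemma BP f w dw I : cont f -> (forall x, derivable_pt_lim w x (dw x)) -> cont dw ->
  is_RInt (fun x => f x * w x) 0 1 I -> is_RInt (fun x => Prim f x * dw x) 0 1 (Prim f 1 * w 1 - I).
Proof.
  intros Hf Hw Hdw HI.
  assert (Hcw : cont w) by (intros x; apply derivable_continuous_pt; exists (dw x); exact (Hw x)).
  assert (H := @is_RInt_derive R_CompleteNormedModule (fun x => Prim f x * w x) (fun x => f x * w x + Prim f x * dw x) 0 1).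
  assert (H' : is_RInt (fun x => f x * w x + Prim f x * dw x) 0 1 (Prim f 1 * w 1 - Prim f 0 * w 0)).
  { apply H.
    - intros x _. apply is_derive_Reals. apply derivable_pt_lim_mult; [apply Prim_derive; auto|auto].
    - intros x _. apply cont_c. apply cont_plus; [apply cont_mult; auto|apply cont_mult; auto; apply Prim_cont; auto]. }
  rewrite Prim0 in H'. eapply iR_val; [eapply iR_ext_all; [|apply (iR_minus _ _ _ _ _ _ H' HI)]|].
  - intros x. simpl. ring.
  - ring.
Qed.

Lemma iR_RInt f : cont f -> is_RInt f 0 1 (RInt f 0 1).
Proof. intros H. apply (@RInt_correct R_CompleteNormedModule). apply exR_cont; auto. Qed.

Lemma cont_1m n : cont (fun x => (1 - x) ^ n).
Proof. apply (cont_comp (fun x => x ^ n)); [apply cont_pow|apply cont_minus; [apply cont_const|apply cont_id]]. Qed.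

Lemma BP1 f n : cont f -> is_RInt (fun x => Prim f x * (1 - x) ^ n) 0 1
   (RInt (fun x => f x * (1 - x) ^ (S n)) 0 1 / INR (S n)).
Proof.
  intros Hf. assert (Hn := INRS_pos n).
  assert (HI : is_RInt (fun x => f x * (- (1 - x) ^ (S n) / INR (S n))) 0 1
     (- / INR (S n) * RInt (fun x => f x * (1 - x) ^ (S n)) 0 1)).
  { eapply iR_ext_all; [|apply iR_scal, iR_RInt, cont_mult; auto; apply cont_1m].
    intros x; simpl. field; apply nzS. }
  eapply iR_val; [eapply (BP f (fun x => - (1 - x) ^ (S n) / INR (S n)) (fun x => (1 - x) ^ n) _ Hf); [|apply cont_1m|exact HI]|].
  - intros x. apply is_derive_Reals. auto_derive; auto. fixINR n. replace (1 + - x) with (1 - x) by ring. field; apply nzS.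
  - simpl. field; apply nzS.
Qed.

Lemma BP2 f n : cont f -> is_RInt (fun x => (Prim f 1 - Prim f x) * x ^ n) 0 1
   (RInt (fun x => f x * x ^ (S n)) 0 1 / INR (S n)).
Proof.
  intros Hf. assert (Hn := INRS_pos n).
  assert (HI : is_RInt (fun x => f x * (x ^ (S n) / INR (S n))) 0 1
     (/ INR (S n) * RInt (fun x => f x * x ^ (S n)) 0 1)).
  { eapply iR_ext_all; [|apply iR_scal, iR_RInt, cont_mult; auto; apply cont_pow].
    intros x; simpl. field; apply nzS. }
  assert (Hd : forall x, derivable_pt_lim (fun x => x ^ (S n) / INR (S n)) x (x ^ n)).
  { intros x. apply is_derive_Reals. auto_derive; auto. fixINR n. field; apply nzS. }
  assert (H2 := BP f _ _ _ Hf Hd (cont_pow n) HI).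
  assert (H3 := iR_scal _ 0 1 (Prim f 1) _ (iR_RInt _ (cont_pow n))).
  eapply iR_val; [eapply iR_ext_all; [|apply (iR_minus _ _ _ _ _ _ H3 H2)]|].
  - intros x. simpl. ring.
  - assert (E : RInt (fun x => x ^ n) 0 1 = / INR (S n)).
    { apply iR_uniq. eapply iR_val.
      - apply (@is_RInt_derive R_CompleteNormedModule (fun x => x ^ (S n) / INR (S n)) (fun x => x ^ n)).
        + intros x _. auto_derive; auto. fixINR n. field; apply nzS.
        + intros x _. apply cont_c, cont_pow.
      - unfold minus, plus, opp; simpl. fixINR n. rewrite pow1. field; apply nzS. }
    rewrite E. simpl. fixINR n. rewrite ?pow1. field; apply nzS.
Qed.

Lemma BP3 f j : cont f -> is_RInt (fun r => Prim f r * (r ^ (S j) - INR (S j) * r ^ j * (1 - r))) 0 1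
   (RInt (fun r => f r * (r ^ (S j) * (1 - r))) 0 1).
Proof.
  intros Hf.
  assert (Hw : forall x, derivable_pt_lim (fun r => r ^ (S j) * (1 - r)) x (INR (S j) * x ^ j * (1 - x) - x ^ (S j))).
  { intros x. apply is_derive_Reals. auto_derive; auto. fixINR j. simpl. ring. }
  assert (Hc : cont (fun x => INR (S j) * x ^ j * (1 - x) - x ^ S j)).
  { apply cont_minus; [apply cont_mult; [apply cont_scal, cont_pow|]|apply cont_pow].
    apply cont_minus; [apply cont_const|apply cont_id]. }
  assert (Hc2 : cont (fun r => f r * (r ^ S j * (1 - r)))).
  { apply cont_mult; auto. apply cont_mult; [apply cont_pow|apply cont_minus; [apply cont_const|apply cont_id]]. }
  assert (H := BP f _ _ _ Hf Hw Hc (iR_RInt _ Hc2)).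
  assert (H' := iR_scal _ _ _ (-1) _ H).
  eapply iR_val; [eapply iR_ext_all; [|exact H']|].
  - intros x. simpl. ring.
  - simpl. ring.
Qed.

Lemma refl01 (g : R -> R) (l : R) : is_RInt g 0 1 l -> is_RInt (fun x => g (1 - x)) 0 1 l.
Proof.
  intros H. assert (H1 := is_RInt_swap _ _ _ _ H).
  assert (H2 : is_RInt g (-1 * 0 + 1) (-1 * 1 + 1) (- l)).
  { replace (-1 * 0 + 1) with 1 by ring. replace (-1 * 1 + 1) with 0 by ring. exact H1. }
  assert (H3 := is_RInt_comp_lin g (-1) 1 0 1 _ H2).
  assert (H4 := iR_scal _ 0 1 (-1) _ H3).
  eapply iR_val; [eapply iR_ext_all; [|exact H4]|].
  - intros x. simpl. unfold scal; simpl. unfold mult; simpl. replace (-1 * x + 1) with (1 - x) by ring. ring.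
  - ring.
Qed.


Definition Lam (j : nat) (s : st) : R :=
  INR (S (S j)) * INR (S j) * RInt (fun g => sphi s g * (1 - g) ^ (S j)) 0 1
  + INR (S (S j)) * RInt (fun x => sal s x * (1 - x) ^ (S j)) 0 1
  + INR (S (S j)) * RInt (fun x => sbe s x * x ^ (S j)) 0 1
  + INR (S (S j)) * INR (S j) * RInt (fun r => sga s r * (r ^ j * (1 - r))) 0 1.

Lemma RIntE (f g : R -> R) : (forall x, f x = g x) -> RInt f 0 1 = RInt g 0 1.
Proof. intros H. apply (@RInt_ext R_CompleteNormedModule). intros; apply H. Qed.

Lemma cont_1mx : cont (fun x => 1 - x).
Proof. apply cont_minus; [apply cont_const|apply cont_id]. Qed.

Lemma Lam_step j s : Inv s -> Lam j (T s) = Lam (S j) s.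
Proof.
  intros [H1 [H2 [H3 [H4 H5]]]].
  set (f := sphi s) in *. set (al := sal s) in *. set (be := sbe s) in *. set (ga := sga s) in *.
  set (Iphi := RInt (fun g => f g * (1 - g) ^ (S (S j))) 0 1).
  set (Ial := RInt (fun x => al x * (1 - x) ^ (S (S j))) 0 1).
  set (Ibe := RInt (fun x => be x * x ^ (S (S j))) 0 1).
  set (Iga := RInt (fun r => ga r * (r ^ (S j) * (1 - r))) 0 1).
  set (J2 := RInt (fun u => Prim ga u * u ^ (S j)) 0 1).
  set (J1 := RInt (fun r => Prim ga r * (r ^ j * (1 - r))) 0 1).
  assert (CJ2 : cont (fun u => Prim ga u * u ^ (S j))) by (apply cont_mult; [apply Prim_cont; auto|apply cont_pow]).
  assert (CJ1 : cont (fun r => Prim ga r * (r ^ j * (1 - r)))).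
  { apply cont_mult; [apply Prim_cont; auto|apply cont_mult; [apply cont_pow|apply cont_1mx]]. }
  assert (EJ : J2 - INR (S j) * J1 = Iga).
  { assert (Hb := BP3 ga j H4).
    assert (Hc := iR_minus _ _ _ _ _ _ (iR_RInt _ CJ2) (iR_scal _ _ _ (INR (S j)) _ (iR_RInt _ CJ1))).
    apply iR_uniq in Hb. rewrite (RIntE _ (fun x => Prim ga x * x ^ S j - INR (S j) * (Prim ga x * (x ^ j * (1 - x))))) in Hb.
    - apply iR_uniq in Hc. unfold J2, J1, Iga. rewrite <- Hc, <- Hb. auto.
    - intros x. ring. }
  assert (Ea : RInt (fun g => sphi (T s) g * (1 - g) ^ (S j)) 0 1 = Iphi + 2 * (Iphi / INR (S (S j)))).
  { apply iR_uniq. eapply iR_ext_all; [|apply iR_plus; [apply iR_RInt|apply iR_scal, BP1; auto]].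
    - intros x. simpl. fold f. ring.
    - apply cont_mult; auto. apply cont_1m. }
  assert (Eb : RInt (fun x => sal (T s) x * (1 - x) ^ (S j)) 0 1 =
     Iphi / INR (S (S j)) + Ial / INR (S (S j)) + Ial + J2).
  { apply iR_uniq. eapply iR_ext_all.
    2:{ apply iR_plus; [apply iR_plus; [apply iR_plus|]|].
        - apply BP1; auto.
        - apply BP1; auto.
        - apply iR_RInt. apply cont_mult; auto. apply cont_1m.
        - apply refl01. apply iR_RInt; auto. }
    intros x. simpl. fold f al ga. ring. }
  assert (Ec : RInt (fun x => sbe (T s) x * x ^ (S j)) 0 1 =
     Iphi / INR (S (S j)) + Ibe + Ibe / INR (S (S j)) + J2).
  { apply iR_uniq. eapply iR_ext_all.
    2:{ apply iR_plus; [apply iR_plus; [apply iR_plus|]|].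
        - apply refl01. apply BP1; auto.
        - apply iR_RInt. apply cont_mult; auto. apply cont_pow.
        - apply BP2; auto.
        - apply iR_RInt; auto. }
    intros x. simpl. fold f be ga. replace (1 - (1 - x)) with x by ring. ring. }
  assert (Ed : RInt (fun r => sga (T s) r * (r ^ j * (1 - r))) 0 1 = Iga - 2 * J1).
  { apply iR_uniq. eapply iR_ext_all.
    2:{ apply iR_minus; [apply iR_RInt|apply iR_scal, iR_RInt; auto].
        apply cont_mult; auto. apply cont_mult; [apply cont_pow|apply cont_1mx]. }
    intros x. simpl. fold ga. ring. }
  unfold Lam. rewrite Ea, Eb, Ec, Ed. fold f al be ga. fold Iphi Ial Ibe Iga.
  assert (K := INRS_pos j). assert (K2 := INRS_pos (S j)).
  replace J2 with (Iga + INR (S j) * J1) by lra.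
  rewrite (S_INR (S (S j))), (S_INR (S j)). rewrite (S_INR (S j)) in K2.
  field. lra.
Qed.

Lemma Lam_base s : Inv s -> is_RInt (fun t => Wsorted (T s) (t :: nil)) 0 1 (Lam 0 s).
Proof.
  intros [H1 [H2 [H3 [H4 H5]]]].
  set (f := sphi s) in *. set (al := sal s) in *. set (be := sbe s) in *. set (ga := sga s) in *.
  eapply iR_val.
  { eapply iR_ext_all.
    2:{ apply iR_plus; [apply iR_plus; [apply iR_plus; [apply iR_plus; [apply iR_plus; [apply iR_plus; [apply iR_plus|]|]|]|]|]|].
        - apply (BP1 f 0 H1).
        - apply (BP1 al 0 H2).
        - apply (iR_RInt (fun x => al x * (1 - x) ^ 1)). apply cont_mult; auto. apply cont_1m.
        - apply (refl01 (fun x => Prim ga x * (1 - x) ^ 0)). apply (BP1 ga 0 H4).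
        - apply (refl01 (fun x => Prim f x * (1 - x) ^ 0)). apply (BP1 f 0 H1).
        - apply (iR_RInt (fun x => be x * x ^ 1)). apply cont_mult; auto. apply cont_pow.
        - apply (BP2 be 0 H3).
        - apply (BP1 ga 0 H4). }
    intros t. unfold Wsorted, hdR, lastR; simpl. fold f al be ga.
    replace (t - t) with 0 by ring. rewrite Prim0. replace (1 - (1 - t)) with t by ring. ring. }
  unfold Lam. fold f al be ga.
  rewrite (RIntE (fun r => ga r * (r ^ 0 * (1 - r))) (fun x => ga x * (1 - x) ^ 1)) by (intros; simpl; ring).
  simpl. field.
Qed.

Lemma Lam_Tn j n s : Inv s -> Lam j (Tn n s) = Lam (j + n) s.
Proof.
  revert j. induction n as [|n IH]; intros j Hs; simpl.
  - rewrite Nat.add_0_r. auto.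
  - rewrite Lam_step by (apply Inv_Tn; auto). rewrite IH by auto. f_equal. lia.
Qed.


Lemma gi_eq s t : gamma_integrand s t = rpow t (s - 1) * exp (- t).
Proof. unfold gamma_integrand, rpow. destruct (Rle_dec t 0); auto. ring. Qed.

Lemma cont_expn : cont (fun t => exp (- t)).
Proof.
  intros x. apply (continuity_pt_comp (fun t => - t) exp).
  - apply continuity_pt_opp, continuity_pt_id.
  - apply derivable_continuous_pt, derivable_pt_exp.
Qed.

Lemma cont_rpow a : 0 < a -> cont (fun t => rpow t a).
Proof. intros Ha x. apply continuity_pt_filterlim, rpow_cont; auto. Qed.

Lemma gi_cont s : 1 < s -> cont (gamma_integrand s).
Proof.
  intros Hs x. apply continuity_pt_ext with (fun t => rpow t (s - 1) * exp (- t)).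
  - intros; rewrite gi_eq; auto.
  - apply cont_mult; [apply cont_rpow; lra|apply cont_expn].
Qed.

Lemma gi_ge0 s t : 0 <= gamma_integrand s t.
Proof. rewrite gi_eq. apply Rmult_le_pos; [apply rpow_ge0|left; apply exp_pos]. Qed.

Definition Fg s b := RInt (gamma_integrand s) 0 b.

Lemma Fg_is s b : 1 < s -> is_RInt (gamma_integrand s) 0 b (Fg s b).
Proof. intros Hs. apply (@RInt_correct R_CompleteNormedModule), exR_cont, gi_cont; auto. Qed.

Lemma Fg_mono s b1 b2 : 1 < s -> 0 <= b1 <= b2 -> Fg s b1 <= Fg s b2.
Proof.
  intros Hs Hb. assert (H := iR_prim _ b1 b2 (gi_cont s Hs)).
  assert (0 <= Prim (gamma_integrand s) b2 - Prim (gamma_integrand s) b1).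
  { apply (is_RInt_ge_0 _ b1 b2 _ ltac:(lra) H). intros; apply gi_ge0. }
  unfold Fg. unfold Prim in H0. lra.
Qed.

Lemma exp_le_exp x y : x <= y -> exp x <= exp y.
Proof. intros [H|H]; [left; apply exp_increasing; auto|subst; lra]. Qed.

Lemma ln_le_m1 x : 0 < x -> ln x <= x - 1.
Proof. intros Hx. assert (H := exp_ineq1_le (ln x)). rewrite exp_ln in H; lra. Qed.

Lemma Rpower_bound t a : 0 < t -> 0 < a -> Rpower t a <= Rpower (2 * a) a * exp (t / 2).
Proof.
  intros Ht Ha. unfold Rpower. rewrite <- exp_plus. apply exp_le_exp.
  assert (H := ln_le_m1 (t * / (2 * a)) ltac:(apply Rmult_lt_0_compat; [lra|apply Rinv_0_lt_compat; lra])).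
  rewrite ln_mult, ln_Rinv in H by (try apply Rinv_0_lt_compat; lra).
  assert (E : t * / (2 * a) * a = t / 2) by (field; lra).
  assert (a * (ln t - ln (2 * a)) <= a * (t * / (2 * a) - 1)) by (apply Rmult_le_compat_l; lra).
  nra.
Qed.

Definition Kb a := Rpower (2 * a) a.

Lemma gi_bound s t : 1 < s -> gamma_integrand s t <= Kb (s - 1) * exp (- t / 2).
Proof.
  intros Hs. rewrite gi_eq. unfold rpow. destruct (Rle_dec t 0).
  - rewrite Rmult_0_l. apply Rmult_le_pos; [left; apply Rpower_pos|left; apply exp_pos].
  - assert (H := Rpower_bound t (s - 1) ltac:(lra) ltac:(lra)).
    replace (- t / 2) with (t / 2 + - t) by field. rewrite exp_plus.
    assert (0 < exp (- t)) by apply exp_pos. unfold Kb. nra.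
Qed.

Lemma iR_expn b : is_RInt (fun t => exp (- t / 2)) 0 b (2 - 2 * exp (- b / 2)).
Proof.
  eapply iR_val.
  - apply (@is_RInt_derive R_CompleteNormedModule (fun t => - 2 * exp (- t / 2)) (fun t => exp (- t / 2))).
    + intros x _. auto_derive; auto. unfold Rdiv. field.
    + intros x _. apply cont_c. apply (cont_comp exp (fun t => - t / 2)).
      * intros y. apply derivable_continuous_pt, derivable_pt_exp.
      * intros y. apply continuity_pt_ext with (fun t => (-1/2) * t); [intros; field|apply cont_scal, cont_id].
  - unfold minus, plus, opp; simpl. replace (- 0 / 2) with 0 by field. rewrite exp_0. ring.
Qed.

Lemma Fg_bound s b : 1 < s -> 0 <= b -> Fg s b <= 2 * Kb (s - 1).
Proof.
  intros Hs Hb. assert (H := iR_scal _ 0 b (Kb (s - 1)) _ (iR_expn b)).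
  assert (Fg s b <= Kb (s - 1) * (2 - 2 * exp (- b / 2))).
  { apply (is_RInt_le _ _ 0 b _ _ Hb (Fg_is s b Hs) H). intros; apply gi_bound; auto. }
  assert (0 < exp (- b / 2)) by apply exp_pos. assert (0 < Kb (s - 1)) by apply Rpower_pos. nra.
Qed.

Lemma Fg_lim s : 1 < s -> exists L, (forall b, 0 <= b -> Fg s b <= L) /\
  forall eps, 0 < eps -> exists B, forall b, B <= b -> Rabs (Fg s b - L) < eps.
Proof.
  intros Hs. set (E := fun y => exists b, 0 <= b /\ y = Fg s b).
  assert (HE1 : bound E) by (exists (2 * Kb (s - 1)); intros y [b [Hb ->]]; apply Fg_bound; auto).
  assert (HE2 : exists y, E y) by (exists (Fg s 0); exists 0; split; [lra|auto]).
  destruct (completeness E HE1 HE2) as [L [HL1 HL2]].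
  exists L. split.
  - intros b Hb. apply HL1. exists b; auto.
  - intros eps He. destruct (Classical_Prop.classic (exists b, 0 <= b /\ L - eps < Fg s b)) as [[b0 [Hb0 Hb0']]|Hn].
    + exists b0. intros b Hb. assert (Fg s b0 <= Fg s b) by (apply Fg_mono; auto; lra).
      assert (Fg s b <= L) by (apply HL1; exists b; split; auto; lra).
      rewrite Rabs_left1 by lra. lra.
    + exfalso. assert (L <= L - eps); [|lra]. apply HL2. intros y [b [Hb ->]].
      destruct (Rle_dec (Fg s b) (L - eps)); auto. exfalso. apply Hn. exists b. split; auto; lra.
Qed.

Lemma is_Gamma_of s g : 1 < s -> (forall eps, 0 < eps -> exists B, forall b, B <= b -> Rabs (Fg s b - g) < eps) -> is_Gamma s g.
Proof.
  intros Hs H. split.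
  - intros b Hb. exists (ex_RInt_Reals_0 _ _ _ (exR_cont _ 0 b (gi_cont s Hs))). auto.
  - intros eps He. destruct (H eps He) as [B HB]. exists B. intros b Hb pr.
    rewrite <- RInt_Reals. apply HB; auto.
Qed.

Lemma is_Gamma_uniq s g1 g2 : is_Gamma s g1 -> is_Gamma s g2 -> g1 = g2.
Proof.
  intros [H1 H2] [_ H3]. destruct (Req_dec g1 g2) as [E|E]; auto. exfalso.
  set (eps := Rabs (g1 - g2) / 2). assert (He : 0 < eps) by (unfold eps; assert (0 < Rabs (g1 - g2)) by (apply Rabs_pos_lt; lra); lra).
  destruct (H2 eps He) as [B1 HB1]. destruct (H3 eps He) as [B2 HB2].
  set (b := Rmax 0 (Rmax B1 B2)).
  destruct (H1 b (Rmax_l _ _)) as [pr _].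
  assert (A1 := HB1 b ltac:(unfold b; eapply Rle_trans; [apply Rmax_l|apply Rmax_r]) pr).
  assert (A2 := HB2 b ltac:(unfold b; eapply Rle_trans; [apply Rmax_r|apply Rmax_r]) pr).
  assert (Rabs (g1 - g2) <= Rabs (RiemannInt pr - g2) + Rabs (RiemannInt pr - g1)).
  { replace (g1 - g2) with ((RiemannInt pr - g2) - (RiemannInt pr - g1)) by ring. apply Rabs_triang_inv2 || (eapply Rle_trans; [apply Rabs_triang|rewrite Rabs_Ropp; lra]). }
  unfold eps in *. lra.
Qed.

Lemma Gamma_eq s g : 1 < s -> (forall eps, 0 < eps -> exists B, forall b, B <= b -> Rabs (Fg s b - g) < eps) -> Gamma s = g.
Proof.
  intros Hs H. assert (Hg := is_Gamma_of s g Hs H). unfold Gamma.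
  destruct (constructive_indefinite_description _ _) as [x [Hx|Hx]]; simpl.
  - apply (is_Gamma_uniq s); auto.
  - exfalso; apply Hx; exists g; auto.
Qed.

Lemma Gamma_lim s : 1 < s -> forall eps, 0 < eps -> exists B, forall b, B <= b -> Rabs (Fg s b - Gamma s) < eps.
Proof.
  intros Hs. destruct (Fg_lim s Hs) as [L [_ HL]]. rewrite (Gamma_eq s L Hs HL). auto.
Qed.

Lemma Fg_le_Gamma s b : 1 < s -> 0 <= b -> Fg s b <= Gamma s.
Proof.
  intros Hs Hb. destruct (Fg_lim s Hs) as [L [HL1 HL]]. rewrite (Gamma_eq s L Hs HL). auto.
Qed.

Lemma Gamma_le_of s K : 1 < s -> (forall b, 0 <= b -> Fg s b <= K) -> Gamma s <= K.
Proof.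
  intros Hs H. destruct (Rle_dec (Gamma s) K) as [|Hn]; auto. exfalso.
  destruct (Gamma_lim s Hs (Gamma s - K) ltac:(lra)) as [B HB].
  specialize (HB (Rmax 0 B) (Rmax_r _ _)). specialize (H (Rmax 0 B) (Rmax_l _ _)).
  apply Rabs_def2 in HB. lra.
Qed.

Lemma Gamma_pos s : 1 < s -> 0 < Gamma s.
Proof.
  intros Hs. eapply Rlt_le_trans; [|apply (Fg_le_Gamma s 1 Hs ltac:(lra))].
  apply RInt_gt_0; [lra| |].
  - intros x Hx. rewrite gi_eq. rewrite rpow_pos by lra. apply Rmult_lt_0_compat; [apply Rpower_pos|apply exp_pos].
  - intros x _. apply cont_c, gi_cont; auto.
Qed.


Lemma dpl_opp (F : R -> R) x l : derivable_pt_lim F x l -> derivable_pt_lim (fun t => - F t) x (- l).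
Proof. intros H. exact (derivable_pt_lim_opp F x l H). Qed.
Lemma dpl_mult (F G : R -> R) x lF lG : derivable_pt_lim F x lF -> derivable_pt_lim G x lG ->
  derivable_pt_lim (fun t => F t * G t) x (lF * G x + F x * lG).
Proof. intros H1 H2. exact (derivable_pt_lim_mult F G x lF lG H1 H2). Qed.

Lemma dpl_expn x : derivable_pt_lim (fun t => exp (- t)) x (- exp (- x)).
Proof.
  replace (- exp (- x)) with (exp (- x) * (-1)) by ring.
  apply (derivable_pt_lim_comp (fun t => - t) exp).
  - replace (-1) with (- (1)) by ring. apply derivable_pt_lim_opp, derivable_pt_lim_id.
  - apply derivable_pt_lim_exp.
Qed.

Lemma decay a : 0 < a -> forall eps, 0 < eps -> exists B, 0 < B /\ forall b, B <= b -> rpow b a * exp (- b) < eps.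
Proof.
  intros Ha eps He. set (K := Kb a). assert (HK : 0 < K) by apply Rpower_pos.
  exists (Rmax 1 (-2 * ln (eps / K) + 1)). split; [apply Rlt_le_trans with 1; [lra|apply Rmax_l]|].
  intros b Hb. assert (H1 := Rmax_l 1 (-2 * ln (eps / K) + 1)). assert (H2 := Rmax_r 1 (-2 * ln (eps / K) + 1)).
  rewrite rpow_pos by lra.
  assert (Hb1 := Rpower_bound b a ltac:(lra) Ha). fold (Kb a) K in Hb1.
  assert (E : exp (- b / 2) < eps / K).
  { rewrite <- (exp_ln (eps / K)) by (apply Rdiv_lt_0_compat; auto). apply exp_increasing. lra. }
  assert (E2 : exp (b / 2) * exp (- b) = exp (- b / 2)) by (rewrite <- exp_plus; f_equal; field).
  assert (0 < exp (- b)) by apply exp_pos.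
  apply Rle_lt_trans with (K * exp (- b / 2)).
  - rewrite <- E2. rewrite <- Rmult_assoc. apply Rmult_le_compat_r; lra.
  - apply Rmult_lt_reg_l with (/ K); [apply Rinv_0_lt_compat; auto|].
    rewrite <- Rmult_assoc, Rinv_l by lra. unfold Rdiv in E. lra.
Qed.

Lemma Fg_rec s b : 1 < s -> 0 <= b -> Fg (s + 1) b = s * Fg s b - rpow b s * exp (- b).
Proof.
  intros Hs Hb.
  set (df := fun x => rpow x s * exp (- x) - s * (rpow x (s - 1) * exp (- x))).
  assert (Hd : forall x, derivable_pt_lim (fun t => - (rpow t s * exp (- t))) x (df x)).
  { intros x. unfold df. replace (rpow x s * exp (- x) - s * (rpow x (s - 1) * exp (- x))) with
      (- ((s * rpow x (s - 1)) * exp (- x) + rpow x s * (- exp (- x)))) by ring.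
    apply dpl_opp. apply (dpl_mult (fun t => rpow t s) (fun t => exp (- t))).
    - apply is_derive_Reals, rpow_derive; auto.
    - apply dpl_expn. }
  assert (Hc : cont df).
  { unfold df. apply cont_minus; [apply cont_mult; [apply cont_rpow; lra|apply cont_expn]|].
    apply cont_scal, cont_mult; [apply cont_rpow; lra|apply cont_expn]. }
  assert (H := @is_RInt_derive R_CompleteNormedModule (fun t => - (rpow t s * exp (- t))) df 0 b
    (fun x _ => proj2 (is_derive_Reals _ _ _) (Hd x)) (fun x _ => cont_c _ _ (Hc x))).
  assert (H2 := iR_plus _ _ _ _ _ _ H (iR_scal _ _ _ s _ (Fg_is s b Hs))).
  apply iR_uniq. eapply iR_ext_all; [|eapply iR_val; [exact H2|]].
  - intros x. unfold df. rewrite !gi_eq. replace (s + 1 - 1) with s by ring. ring.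
  - unfold minus, plus, opp; simpl. rewrite (rpow_le0 0) by lra. ring.
Qed.

Lemma Gamma_rec s : 1 < s -> Gamma (s + 1) = s * Gamma s.
Proof.
  intros Hs. apply Gamma_eq; [lra|]. intros eps He.
  destruct (Gamma_lim s Hs (eps / (2 * s)) ltac:(apply Rdiv_lt_0_compat; lra)) as [B1 HB1].
  destruct (decay s ltac:(lra) (eps / 2) ltac:(lra)) as [B2 [HB2p HB2]].
  exists (Rmax B2 (Rmax B1 0)). intros b Hb.
  assert (Hb2 : B2 <= b) by (eapply Rle_trans; [apply Rmax_l|apply Hb]).
  assert (Hb1 : B1 <= b) by (eapply Rle_trans; [|apply Hb]; eapply Rle_trans; [apply Rmax_l|apply Rmax_r]).
  rewrite Fg_rec by lra. specialize (HB1 b Hb1). specialize (HB2 b Hb2).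
  assert (0 <= rpow b s * exp (- b)) by (apply Rmult_le_pos; [apply rpow_ge0|left; apply exp_pos]).
  apply Rabs_def2 in HB1. apply Rabs_def1.
  - assert (s * (Fg s b - Gamma s) < s * (eps / (2 * s))) by (apply Rmult_lt_compat_l; lra).
    replace (s * (eps / (2 * s))) with (eps / 2) in H0 by (field; lra). nra.
  - assert (s * (- (eps / (2 * s))) < s * (Fg s b - Gamma s)) by (apply Rmult_lt_compat_l; lra).
    replace (s * (- (eps / (2 * s)))) with (- (eps / 2)) in H0 by (field; lra). nra.
Qed.

Lemma Fg2 b : 0 <= b -> Fg 2 b = 1 - (b + 1) * exp (- b).
Proof.
  intros Hb. apply iR_uniq. eapply iR_ext; [exact Hb| |].
  2:{ eapply iR_val.
      - apply (@is_RInt_derive R_CompleteNormedModule (fun t => - ((t + 1) * exp (- t))) (fun t => t * exp (- t))).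
        + intros x _. auto_derive; auto. ring.
        + intros x _. apply cont_c. apply cont_mult; [apply cont_id|apply cont_expn].
      - unfold minus, plus, opp; simpl. replace (- 0) with 0 by ring. rewrite exp_0. ring. }
  intros x Hx. simpl. rewrite gi_eq. replace (2 - 1) with 1 by ring. rewrite rpow_pos, Rpower_1 by lra. auto.
Qed.

Lemma Gamma2 : Gamma 2 = 1.
Proof.
  apply Gamma_eq; [lra|]. intros eps He.
  destruct (decay 1 ltac:(lra) (eps / 2) ltac:(lra)) as [B [HBp HB]].
  exists (Rmax 1 B). intros b Hb. assert (H1 := Rmax_l 1 B). assert (H2 := Rmax_r 1 B).
  rewrite Fg2 by lra. specialize (HB b ltac:(lra)). rewrite rpow_pos, Rpower_1 in HB by lra.
  assert (0 < exp (- b)) by apply exp_pos.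
  rewrite Rabs_left1; [|nra]. nra.
Qed.

Lemma Gamma_nat n : (1 <= n)%nat -> Gamma (INR n + 1) = INR (fact n).
Proof.
  induction n as [|n IH]; intros Hn; [lia|].
  destruct n as [|n].
  - simpl. replace (1 + 1) with 2 by ring. apply Gamma2.
  - rewrite S_INR. rewrite Gamma_rec by (assert (0 < INR (S n)) by (apply lt_0_INR; lia); lra).
    rewrite IH by lia. rewrite (fact_simpl (S n)), mult_INR. rewrite (S_INR (S n)). ring.
Qed.

Lemma exp_convex t a b : 0 <= t <= 1 -> exp (t * a + (1 - t) * b) <= t * exp a + (1 - t) * exp b.
Proof.
  intros Ht. set (m := t * a + (1 - t) * b).
  assert (Ea : exp a = exp m * exp (a - m)) by (rewrite <- exp_plus; f_equal; ring).
  assert (Eb : exp b = exp m * exp (b - m)) by (rewrite <- exp_plus; f_equal; ring).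
  assert (Ia := exp_ineq1_le (a - m)). assert (Ib := exp_ineq1_le (b - m)).
  assert (Hm : 0 < exp m) by apply exp_pos.
  rewrite Ea, Eb.
  assert (exp m * exp (a - m) >= exp m * (1 + (a - m))) by nra.
  assert (exp m * exp (b - m) >= exp m * (1 + (b - m))) by nra.
  assert (t * (exp m * exp (a - m)) >= t * (exp m * (1 + (a - m)))) by nra.
  assert ((1 - t) * (exp m * exp (b - m)) >= (1 - t) * (exp m * (1 + (b - m)))) by nra.
  assert (E : t * (exp m * (1 + (a - m))) + (1 - t) * (exp m * (1 + (b - m))) = exp m) by (unfold m; ring).
  lra.
Qed.

Lemma gi_exp s t : 0 < t -> gamma_integrand s t = exp ((s - 1) * ln t - t).
Proof.
  intros Ht. rewrite gi_eq, rpow_pos by auto. unfold Rpower. rewrite <- exp_plus. f_equal; ring.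
Qed.

Lemma holder th s1 s2 : 0 < th < 1 -> 1 < s1 -> 1 < s2 ->
  Gamma (th * s1 + (1 - th) * s2) <= Rpower (Gamma s1) th * Rpower (Gamma s2) (1 - th).
Proof.
  intros Ht H1 H2. set (s := th * s1 + (1 - th) * s2).
  assert (Hs : 1 < s) by (unfold s; nra).
  set (G1 := Gamma s1). set (G2 := Gamma s2).
  assert (P1 : 0 < G1) by (apply Gamma_pos; auto). assert (P2 : 0 < G2) by (apply Gamma_pos; auto).
  set (K := Rpower G1 th * Rpower G2 (1 - th)).
  assert (HK : 0 < K) by (unfold K; apply Rmult_lt_0_compat; apply Rpower_pos).
  apply Gamma_le_of; auto. intros b Hb.
  assert (Hpt : forall t, gamma_integrand s t <= K * (th / G1 * gamma_integrand s1 t + (1 - th) / G2 * gamma_integrand s2 t)).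
  { intros t. destruct (Rle_dec t 0) as [Ht0|Ht0].
    - unfold gamma_integrand. destruct (Rle_dec t 0); [|lra]. lra.
    - rewrite !gi_exp by lra.
      set (u1 := (s1 - 1) * ln t - t - ln G1). set (u2 := (s2 - 1) * ln t - t - ln G2).
      assert (C := exp_convex th u1 u2 ltac:(lra)).
      assert (E1 : exp ((s - 1) * ln t - t) = K * exp (th * u1 + (1 - th) * u2)).
      { unfold K, Rpower. rewrite <- !exp_plus. f_equal. unfold u1, u2, s. ring. }
      assert (E2 : exp u1 = / G1 * exp ((s1 - 1) * ln t - t)).
      { unfold u1. replace ((s1 - 1) * ln t - t - ln G1) with (((s1 - 1) * ln t - t) + - ln G1) by ring.
        rewrite exp_plus, exp_Ropp, exp_ln by auto. ring. }
      assert (E3 : exp u2 = / G2 * exp ((s2 - 1) * ln t - t)).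
      { unfold u2. replace ((s2 - 1) * ln t - t - ln G2) with (((s2 - 1) * ln t - t) + - ln G2) by ring.
        rewrite exp_plus, exp_Ropp, exp_ln by auto. ring. }
      rewrite E1. apply Rmult_le_compat_l; [lra|]. rewrite E2, E3 in C. unfold Rdiv. lra. }
  assert (HR := iR_scal _ _ _ K _ (iR_plus _ _ _ _ _ _ (iR_scal _ _ _ (th / G1) _ (Fg_is s1 b H1))
                                         (iR_scal _ _ _ ((1 - th) / G2) _ (Fg_is s2 b H2)))).
  assert (Hle := is_RInt_le _ _ 0 b _ _ Hb (Fg_is s b Hs) HR (fun t _ => Hpt t)).
  assert (F1 := Fg_le_Gamma s1 b H1 Hb). assert (F2 := Fg_le_Gamma s2 b H2 Hb). fold G1 G2 in F1, F2.
  assert (th / G1 * Fg s1 b <= th) by (unfold Rdiv; apply Rmult_le_reg_l with G1; auto; field_simplify; try lra; nra).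
  assert ((1 - th) / G2 * Fg s2 b <= 1 - th) by (unfold Rdiv; apply Rmult_le_reg_l with G2; auto; field_simplify; try lra; nra).
  nra.
Qed.

Lemma wendel1 x p : 1 < x -> 0 < p < 1 -> Gamma (x + p) <= Rpower x p * Gamma x.
Proof.
  intros Hx Hp. assert (H := holder (1 - p) x (x + 1) ltac:(lra) Hx ltac:(lra)).
  replace ((1 - p) * x + (1 - (1 - p)) * (x + 1)) with (x + p) in H by ring.
  replace (1 - (1 - p)) with p in H by ring.
  rewrite Gamma_rec in H by auto. assert (Pg := Gamma_pos x Hx).
  rewrite <- Rpower_mult_distr in H by lra.
  replace (Rpower (Gamma x) (1 - p) * (Rpower x p * Rpower (Gamma x) p)) with
    (Rpower x p * (Rpower (Gamma x) (1 - p) * Rpower (Gamma x) p)) in H by ring.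
  rewrite <- Rpower_plus in H. replace (1 - p + p) with 1 in H by ring. rewrite Rpower_1 in H; auto.
Qed.

Lemma wendel2 x p : 1 < x -> 0 < p < 1 -> Gamma (x + 1) <= Rpower (x + p) (1 - p) * Gamma (x + p).
Proof.
  intros Hx Hp. assert (H := holder p (x + p) (x + p + 1) ltac:(lra) ltac:(lra) ltac:(lra)).
  replace (p * (x + p) + (1 - p) * (x + p + 1)) with (x + 1) in H by ring.
  rewrite (Gamma_rec (x + p)) in H by lra. assert (Pg := Gamma_pos (x + p) ltac:(lra)).
  rewrite <- Rpower_mult_distr in H by lra.
  replace (Rpower (Gamma (x + p)) p * (Rpower (x + p) (1 - p) * Rpower (Gamma (x + p)) (1 - p))) with
    (Rpower (x + p) (1 - p) * (Rpower (Gamma (x + p)) p * Rpower (Gamma (x + p)) (1 - p))) in H by ring.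
  rewrite <- Rpower_plus in H. replace (p + (1 - p)) with 1 in H by ring. rewrite Rpower_1 in H; auto.
Qed.


Lemma dpl_scal (F : R -> R) c x l : derivable_pt_lim F x l -> derivable_pt_lim (fun t => c * F t) x (c * l).
Proof. intros H. exact (derivable_pt_lim_scal F c x l H). Qed.

Lemma rpow1 a : rpow 1 a = 1.
Proof. rewrite rpow_pos by lra. unfold Rpower. rewrite ln_1, Rmult_0_r. apply exp_0. Qed.

Lemma Iint a n : 0 < a -> RInt (fun g => rpow g a * (1 - g) ^ n) 0 1 = INR (fact n) * Gamma (a + 1) / Gamma (a + INR n + 2).
Proof.
  revert a. induction n as [|n IH]; intros a Ha.
  - apply iR_uniq. eapply iR_ext_all; [|eapply iR_val].
    2:{ apply (@is_RInt_derive R_CompleteNormedModule (fun g => / (a + 1) * rpow g (a + 1)) (fun g => rpow g a)).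
        - intros x _. apply is_derive_Reals.
          replace (rpow x a) with (/ (a + 1) * ((a + 1) * rpow x (a + 1 - 1))) by (replace (a + 1 - 1) with a by ring; field; lra).
          apply dpl_scal. apply is_derive_Reals, rpow_derive. lra.
        - intros x _. apply cont_c, cont_rpow; auto. }
    + intros x; simpl. ring.
    + unfold minus, plus, opp; simpl. rewrite rpow1, (rpow_le0 0) by lra.
      replace (a + 0 + 2) with ((a + 1) + 1) by ring. rewrite (Gamma_rec (a + 1)) by lra.
      assert (0 < Gamma (a + 1)) by (apply Gamma_pos; lra). field; repeat split; apply Rgt_not_eq; lra.
  - assert (Hb : is_RInt (fun g => rpow g a * (1 - g) ^ (S n)) 0 1
       (INR (S n) / (a + 1) * RInt (fun g => rpow g (a + 1) * (1 - g) ^ n) 0 1)).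
    { set (h := fun g => / (a + 1) * rpow g (a + 1) * (1 - g) ^ (S n)).
      set (dh := fun g => rpow g a * (1 - g) ^ (S n) - INR (S n) / (a + 1) * (rpow g (a + 1) * (1 - g) ^ n)).
      assert (Hd : forall x, derivable_pt_lim h x (dh x)).
      { intros x. unfold h, dh.
        assert (D1 : derivable_pt_lim (fun t => / (a + 1) * rpow t (a + 1)) x (rpow x a)).
        { replace (rpow x a) with (/ (a + 1) * ((a + 1) * rpow x (a + 1 - 1))) by (replace (a + 1 - 1) with a by ring; field; lra).
          apply dpl_scal. apply is_derive_Reals, rpow_derive. lra. }
        assert (D2 : derivable_pt_lim (fun t => (1 - t) ^ (S n)) x (- (INR (S n) * (1 - x) ^ n))).
        { apply is_derive_Reals. auto_derive; auto. change (match n with 0%nat => 1 | S _ => INR n + 1 end) with (INR (S n)).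
          replace (1 + - x) with (1 - x) by ring. ring. }
        assert (D3 := dpl_mult _ _ x _ _ D1 D2). simpl in D3.
        eapply derivable_pt_lim_eq_locally; [|exact D3] || idtac.
        replace (rpow x a * (1 - x) ^ S n - INR (S n) / (a + 1) * (rpow x (a + 1) * (1 - x) ^ n)) with
          (rpow x a * (1 - x) ^ S n + / (a + 1) * rpow x (a + 1) * - (INR (S n) * (1 - x) ^ n)) by (field; lra).
        exact D3. }
      assert (Hc : cont dh).
      { unfold dh. apply cont_minus; [apply cont_mult; [apply cont_rpow; lra|apply cont_1m]|].
        apply cont_scal, cont_mult; [apply cont_rpow; lra|apply cont_1m]. }
      assert (H := @is_RInt_derive R_CompleteNormedModule h dh 0 1
        (fun x _ => proj2 (is_derive_Reals _ _ _) (Hd x)) (fun x _ => cont_c _ _ (Hc x))).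
      assert (H2 := iR_plus _ _ _ _ _ _ H (iR_scal _ _ _ (INR (S n) / (a + 1)) _
                 (iR_RInt (fun g => rpow g (a + 1) * (1 - g) ^ n) ltac:(apply cont_mult; [apply cont_rpow; lra|apply cont_1m])))).
      eapply iR_ext_all; [|eapply iR_val; [exact H2|]].
      - intros x. unfold dh. simpl. ring.
      - unfold minus, plus, opp, h; simpl. rewrite (rpow_le0 0) by lra. ring. }
    apply iR_uniq in Hb. rewrite Hb. rewrite IH by lra.
    rewrite fact_simpl, mult_INR.
    replace (a + 1 + INR n + 2) with (a + INR (S n) + 2) by (rewrite S_INR; ring).
    replace (a + 1 + 1) with ((a + 1) + 1) by ring. rewrite (Gamma_rec (a + 1)) by lra.
    assert (0 < Gamma (a + INR (S n) + 2)) by (apply Gamma_pos; assert (0 <= INR (S n)) by apply pos_INR; lra).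
    match goal with |- ?A = ?B => change (@eq R A B) end. field; repeat split; apply Rgt_not_eq; lra.
Qed.

Definition stN p := mkst (rp p) (fun _ => 0) (fun _ => 0) (rp p).

Lemma Inv_stN p : 0 < p -> Inv (stN p).
Proof.
  intros Hp. unfold Inv, stN; simpl. repeat split; try apply cont_const.
  - unfold rp. apply cont_rpow; auto.
  - unfold rp. apply cont_rpow; auto.
  - apply rp0; auto.
Qed.

Lemma Wl_stN p xs : xs <> nil -> Wl (stN p) xs = Sv p xs.
Proof.
  intros Hn. unfold Wl, Sv, Wsorted. rewrite cycv_sorted by (try apply sortR_nil; auto; apply sorted_sortR).
  simpl. ring.
Qed.

Lemma part1_Lam p m : 0 < p < 1 -> IterInt (S (S m)) (E_N (S (S m)) p) (Lam m (stN p)).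
Proof.
  intros Hp. apply IterInt_ext with (fun ys => Wl (stN p) ys).
  - intros ys Hl. rewrite E_N_eq by auto. apply Wl_stN. destruct ys; simpl in Hl; congruence.
  - simpl. exists (fun t => Wl (Tn (S m) (stN p)) (t :: nil)). split.
    + intros t Ht. exact (main_iter (S m) (stN p) (t :: nil) (Inv_stN p ltac:(lra)) ltac:(congruence)
         ltac:(intros z [Hz|[]]; subst; auto)).
    + apply iR_to_Riemann. rewrite <- (Nat.add_0_l m). rewrite <- Lam_Tn by (apply Inv_stN; lra).
      apply (Lam_base (Tn m (stN p))). apply Inv_Tn, Inv_stN; lra.
Qed.

Lemma RInt_zero (h : R -> R) : RInt (fun x => 0 * h x) 0 1 = 0.
Proof.
  apply iR_uniq. eapply iR_ext_all; [|eapply iR_val; [apply (iR_const 0 1 0)|ring]]. intros; simpl; ring.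
Qed.

Definition formula (N : nat) (p : R) : R :=
  Gamma (INR N + 1) / Gamma (INR N + p + 1) *
  ((INR N - 1) * Gamma (p + 1) + Gamma (INR N + p - 1) / Gamma (INR N - 1)).

Lemma Lam_value p m : 0 < p < 1 -> (1 <= m)%nat -> Lam m (stN p) = formula (S (S m)) p.
Proof.
  intros Hp Hm. unfold Lam, stN, formula; simpl sphi; simpl sal; simpl sbe; simpl sga.
  rewrite !RInt_zero.
  unfold rp. rewrite (Iint p (S m)) by lra.
  rewrite (@RInt_ext R_CompleteNormedModule (fun r => rpow r p * (r ^ m * (1 - r))) (fun r => rpow r (p + INR m) * (1 - r) ^ 1)).
  2:{ intros x Hx. rewrite Rmin_left, Rmax_right in Hx by lra.
      rewrite !rpow_pos by lra. rewrite Rpower_plus, Rpower_pow by lra. simpl. ring. }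
  rewrite (Iint (p + INR m) 1) by (assert (0 <= INR m) by apply pos_INR; lra).
  assert (Hm0 : 0 <= INR m) by apply pos_INR.
  rewrite (Gamma_nat (S (S m))) by lia.
  replace (INR (S (S m)) - 1) with (INR m + 1) by (rewrite !S_INR; ring).
  rewrite (Gamma_nat m) by lia.
  replace (INR (S (S m)) + p + 1) with (p + INR (S m) + 2) by (rewrite !S_INR; ring).
  replace (INR (S (S m)) + p - 1) with (p + INR m + 1) by (rewrite !S_INR; ring).
  replace (p + INR m + INR 1 + 2) with (p + INR (S m) + 2) by (rewrite !S_INR; simpl; ring).
  assert (G1 : 0 < Gamma (p + INR (S m) + 2)) by (apply Gamma_pos; rewrite S_INR; lra).
  assert (F0 : 0 < INR (fact m)) by apply INR_fact_lt_0.
  rewrite (fact_simpl (S m)), (fact_simpl m), !mult_INR. simpl (fact 1). rewrite !S_INR.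
  match goal with |- ?A = ?B => change (@eq R A B) end.
  rewrite S_INR in G1. rewrite INR_0. field. split; apply Rgt_not_eq; lra.
Qed.

Lemma part1 p N : 0 < p < 1 -> (3 <= N)%nat -> IterInt N (E_N N p) (formula N p).
Proof.
  intros Hp HN. destruct N as [|[|[|m]]]; try lia.
  rewrite <- Lam_value by (auto; lia). apply part1_Lam; auto.
Qed.


Lemma IterInt_uniq n F v1 v2 : IterInt n F v1 -> IterInt n F v2 -> v1 = v2.
Proof.
  revert F v1 v2. induction n as [|n IH]; intros F v1 v2 H1 H2; simpl in *.
  - congruence.
  - destruct H1 as [g1 [Hg1 [pr1 E1]]]. destruct H2 as [g2 [Hg2 [pr2 E2]]].
    rewrite <- E1, <- E2, <- !RInt_Reals.
    apply (@RInt_ext R_CompleteNormedModule). intros x Hx. rewrite Rmin_left, Rmax_right in Hx by lra.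
    apply (IH (fun ys => F (x :: ys))); [apply Hg1|apply Hg2]; lra.
Qed.

Lemma ExpE_val p N : 0 < p < 1 -> (3 <= N)%nat -> ExpE N p = formula N p.
Proof.
  intros Hp HN. assert (H := part1 p N Hp HN). unfold ExpE.
  destruct (constructive_indefinite_description _ _) as [v [Hv|Hv]]; simpl.
  - apply (IterInt_uniq N (E_N N p)); auto.
  - exfalso. apply Hv. exists (formula N p). auto.
Qed.

Lemma bound_n p x : 0 < p < 1 -> 2 < x ->
  Rabs (Rpower x (p - 1) * (Gamma (x + 1) / Gamma (x + p + 1) *
     ((x - 1) * Gamma (p + 1) + Gamma (x + p - 1) / Gamma (x - 1))) - Gamma (p + 1))
  <= 2 * Gamma (p + 1) / x + Rpower x (p - 1).
Proof.
  intros Hp Hx.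
  set (A := Gamma x). set (B := Gamma (x + p)). set (Gp := Gamma (p + 1)).
  assert (HA : 0 < A) by (apply Gamma_pos; lra). assert (HB : 0 < B) by (apply Gamma_pos; lra).
  assert (HG : 0 < Gp) by (apply Gamma_pos; lra).
  assert (Ea : Gamma (x + 1) = x * A) by (apply Gamma_rec; lra).
  assert (Eb : Gamma (x + p + 1) = (x + p) * B) by (apply Gamma_rec; lra).
  assert (Ec : A = (x - 1) * Gamma (x - 1)).
  { unfold A. replace x with ((x - 1) + 1) at 1 by ring. apply Gamma_rec; lra. }
  assert (Ed : B = (x + p - 1) * Gamma (x + p - 1)).
  { unfold B. replace (x + p) with ((x + p - 1) + 1) at 1 by ring. apply Gamma_rec; lra. }
  assert (W1 := wendel1 x p ltac:(lra) Hp). fold A B in W1.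
  assert (W2 := wendel2 x p ltac:(lra) Hp). rewrite Ea in W2. fold B in W2.
  set (P := Rpower x p) in *. set (Q := Rpower (x + p) (1 - p)) in *.
  assert (HP : 0 < P) by apply Rpower_pos. assert (HQ : 0 < Q) by apply Rpower_pos.
  assert (PQ : P * Q <= x + p).
  { assert (P <= Rpower (x + p) p) by (apply Rle_Rpower_l; lra).
    assert (Rpower (x + p) p * Q = x + p).
    { unfold Q. rewrite <- Rpower_plus. replace (p + (1 - p)) with 1 by ring. apply Rpower_1; lra. }
    assert (P * Q <= Rpower (x + p) p * Q) by (apply Rmult_le_compat_r; lra). lra. }
  assert (EE : Rpower x (p - 1) = P / x).
  { unfold P, Rminus. rewrite Rpower_plus, Rpower_Ropp, Rpower_1 by lra. field. lra. }
  rewrite EE, Ea, Eb.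
  assert (G1 : Gamma (x - 1) = A / (x - 1)) by (rewrite Ec; field; lra).
  assert (G2 : Gamma (x + p - 1) = B / (x + p - 1)) by (rewrite Ed; field; lra).
  rewrite G1, G2.
  set (q := P * x * A / ((x + p) * B)).
  assert (Hq1 : q <= 1).
  { unfold q. apply Rmult_le_reg_r with ((x + p) * B); [nra|].
    unfold Rdiv. rewrite Rmult_assoc, Rinv_l, Rmult_1_r by nra.
    assert (P * (x * A) <= P * (Q * B)) by (apply Rmult_le_compat_l; lra).
    assert (P * Q * B <= (x + p) * B) by (apply Rmult_le_compat_r; lra). nra. }
  assert (Hq0 : x / (x + p) <= q).
  { unfold q. apply Rmult_le_reg_r with ((x + p) * B); [nra|].
    unfold Rdiv. rewrite (Rmult_assoc (P * x * A)), Rinv_l, Rmult_1_r by nra.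
    replace (x * / (x + p) * ((x + p) * B)) with (x * B) by (field; lra).
    assert (x * B <= x * (P * A)) by (apply Rmult_le_compat_l; lra). nra. }
  set (s2 := x * (x - 1) / ((x + p) * (x + p - 1))).
  assert (Hs2 : 0 <= s2 <= 1).
  { unfold s2. split.
    - apply Rdiv_le_0_compat; nra.
    - apply Rmult_le_reg_r with ((x + p) * (x + p - 1)); [nra|].
      unfold Rdiv. rewrite Rmult_assoc, Rinv_l, Rmult_1_r by nra. nra. }
  assert (Eu : P / x * (x * A / ((x + p) * B) * ((x - 1) * Gp + B / (x + p - 1) / (A / (x - 1))))
     = Gp * q * ((x - 1) / x) + P / x * s2).
  { unfold q, s2. field. repeat split; lra. }
  rewrite Eu.
  assert (HPx : 0 < P / x) by (apply Rdiv_lt_0_compat; lra).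
  assert (Hqx : x / (x + p) = 1 - p / (x + p)) by (field; lra).
  assert (p / (x + p) <= 1 / x) by (apply Rmult_le_reg_r with (x * (x + p)); [nra|]; unfold Rdiv;
     replace (p * / (x + p) * (x * (x + p))) with (p * x) by (field; lra);
     replace (1 * / x * (x * (x + p))) with (x + p) by (field; lra); nra).
  assert (Hxp : 0 < x / (x + p)) by (apply Rdiv_lt_0_compat; lra).
  assert (Hd : Rabs (q * ((x - 1) / x) - 1) <= 2 / x).
  { replace (q * ((x - 1) / x) - 1) with ((q - 1) - q / x) by (field; lra).
    assert (0 <= q / x <= 1 / x) by (split; [apply Rdiv_le_0_compat; lra|unfold Rdiv; apply Rmult_le_compat_r; [left; apply Rinv_0_lt_compat; lra|lra]]).
    apply Rabs_le. split; unfold Rdiv in *; lra. }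
  replace (Gp * q * ((x - 1) / x) + P / x * s2 - Gp) with (Gp * (q * ((x - 1) / x) - 1) + P / x * s2) by ring.
  eapply Rle_trans; [apply Rabs_triang|]. rewrite Rabs_mult, (Rabs_right Gp) by lra.
  rewrite (Rabs_right (P / x * s2)) by nra.
  assert (Gp * Rabs (q * ((x - 1) / x) - 1) <= Gp * (2 / x)) by (apply Rmult_le_compat_l; lra).
  assert (P / x * s2 <= P / x) by nra.
  unfold Rdiv in *. nra.
Qed.

Lemma limit p : 0 < p < 1 -> Un_cv (fun N => Rpower (INR N) (p - 1) * ExpE N p) (Gamma (p + 1)).
Proof.
  intros Hp eps He. set (Gp := Gamma (p + 1)). assert (HG : 0 < Gp) by (apply Gamma_pos; lra).
  set (M := Rpower (eps / 4) (/ (p - 1))). assert (HM : 0 < M) by apply Rpower_pos.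
  assert (HMe : Rpower M (p - 1) = eps / 4).
  { unfold M. rewrite Rpower_mult. replace (/ (p - 1) * (p - 1)) with 1 by (field; lra). apply Rpower_1; lra. }
  destruct (INR_archimed 1 (Rmax 3 (Rmax M (4 * Gp / eps))) ltac:(lra)) as [n0 Hn0].
  rewrite Rmult_1_r in Hn0.
  assert (A1 := Rmax_l 3 (Rmax M (4 * Gp / eps))). assert (A2 := Rmax_r 3 (Rmax M (4 * Gp / eps))).
  assert (A3 := Rmax_l M (4 * Gp / eps)). assert (A4 := Rmax_r M (4 * Gp / eps)).
  exists n0. intros n Hn. unfold R_dist.
  assert (Hx : INR n0 <= INR n) by (apply le_INR; lia).
  assert (H3 : (3 <= n)%nat) by (apply INR_le; replace (INR 3) with 3 by (simpl; ring); lra).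
  set (x := INR n) in *.
  rewrite ExpE_val by auto. unfold formula. fold x.
  eapply Rle_lt_trans; [apply bound_n; auto; lra|]. fold Gp.
  assert (Hx1 : Rpower x (p - 1) <= eps / 4) by (rewrite <- HMe; apply Rpower_neg_decr; lra).
  assert (Hx2 : 2 * Gp / x < eps / 2).
  { apply Rmult_lt_reg_r with x; [lra|]. unfold Rdiv. rewrite Rmult_assoc, Rinv_l, Rmult_1_r by lra.
    assert (4 * Gp / eps < x) by lra. unfold Rdiv in H.
    apply Rmult_lt_compat_r with (r := eps) in H; [|lra]. rewrite Rmult_assoc, Rinv_l, Rmult_1_r in H by lra. nra. }
  lra.
Qed.


Theorem mainTheorem12 (p : R) (hp0 : 0 < p) (hp1 : p < 1) :
  (forall N : nat, (3 <= N)%nat ->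
     IterInt N (E_N N p)
       (Gamma (INR N + 1) / Gamma (INR N + p + 1) *
        ((INR N - 1) * Gamma (p + 1) + Gamma (INR N + p - 1) / Gamma (INR N - 1)))) /\
  Un_cv (fun N => Rpower (INR N) (p - 1) * ExpE N p) (Gamma (p + 1)).
Proof.
  split.
  - intros N HN. exact (part1 p N (conj hp0 hp1) HN).
  - apply limit; auto.
Qed.
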